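(* Consider the linear control system $\Sigma$ on $G$ with parameters $(a,b),(\alpha,\beta)\in\mathbb{R}^2\setminus\{(0,0)\}$. Then: 1. If $\alpha=0$, then $\Sigma$ has infinitely many control sets. 2. If $\alpha\neq 0$, then $\Sigma$ has exactly one control set. This control set has nonempty interior if and only if $\Sigma$ satisfies the Lie algebra rank condition, i.e. if and only if $\alpha(a\alpha+b\beta)\neq 0$.
   Context: Let $G=\{(x,y)\in\mathbb{R}^2: x>0\}$, which is a Lie group with the product $(x_1,y_1)\cdot(x_2,y_2)=(x_1x_2,\ y_2+x_2y_1)$. Fix $\Omega=[u_*,u^*]$ with $u_*<0<u^*$. The admissible controls $\mathcal U$ are the piecewise constant functions $u:\mathbb{R}\to\Omega$. For constants $(a,b),(\alpha,\beta)\in\mathbb{R}^2\setminus\{(0,0)\}$, the linear control system $\Sigma$ on $G$ is $\dot x=u\alpha x,\quad \dot y=a(x-1)+by+u x\beta,\quad u\in\mathcal U.$ We write $\varphi(t,p,u)$ for the solution with $\varphi(0,p,u)=p$, and $\mathcal O^+(p)=\{\varphi(t,p,u): t\ge 0,\ u\in\mathcal U\}$ for the positive orbit of $p$. A control set is a subset $\mathcal C\subset G$ that is maximal with respect to inclusion among the sets satisfying both of the following: (i) for every $p\in\mathcal C$ there is $u\in\mathcal U$ with $\varphi(t,p,u)\in\mathcal C$ for all $t\ge 0$; (ii) $\mathcal C\subset\operatorname{cl}\mathcal O^+(p)$ for every $p\in\mathcal C$, where the closure is taken in $G$. The Lie algebra rank condition (LARC) holds if the Lie algebra of vector fields generated by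 $f_u(x,y)=(u\alpha x,\ a(x-1)+by+ux\beta)$, $u\in\Omega$, spans $\mathbb{R}^2$ at every point of $G$. *)

(* Defs.v *)
From Stdlib Require Import Reals List.
Open Scope R_scope.

Definition inG (p : R * R) : Prop := 0 < fst p.

Definition field (a b al be u : R) (p : R * R) : R * R :=
  (u * al * fst p, a * (fst p - 1) + b * snd p + u * fst p * be).

(* Piecewise constant: on every compact interval [t0,t1] there are finitely
   many points (a list l) off which u is constant on each connected piece. *)
Definition piecewise_constant (u : R -> R) : Prop :=
  forall t0 t1 : R, exists l : list R,
    forall s1 s2 : R, t0 <= s1 -> s1 <= s2 -> s2 <= t1 ->
      (forall c, In c l -> c < s1 \/ s2 < c) -> u s1 = u s2.

Definition admissible (us uS : R) (u : R -> R) : Prop :=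
  piecewise_constant u /\ (forall t, us <= u t <= uS).

(* gam is the solution phi(.,p,u): continuous, gam 0 = p, and satisfying the
   ODE at every time t where u is locally constant (for piecewise constant u
   the remaining times form a locally finite set). *)
Definition is_solution (a b al be : R) (u : R -> R) (p : R * R)
    (gam : R -> R * R) : Prop :=
  gam 0 = p /\
  (forall t, continuity_pt (fun s => fst (gam s)) t /\
             continuity_pt (fun s => snd (gam s)) t) /\
  (forall t, (exists d, 0 < d /\ forall s, Rabs (s - t) < d -> u s = u t) ->
     derivable_pt_lim (fun s => fst (gam s)) t (fst (field a b al be (u t) (gam t))) /\
     derivable_pt_lim (fun s => snd (gam s)) t (snd (field a b al be (u t) (gam t)))).

Definition pos_orbit (a b al be us uS : R) (p q : R * R) : Prop :=
  exists u gam t, admissible us uS u /\ is_solution a b al be u p gam /\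
    0 <= t /\ gam t = q.

(* Closure (in R^2; for points of G this is the closure in G). *)
Definition in_closure (S : R * R -> Prop) (q : R * R) : Prop :=
  forall eps, 0 < eps -> exists s, S s /\
    Rabs (fst s - fst q) < eps /\ Rabs (snd s - snd q) < eps.

Definition cs_props (a b al be us uS : R) (C : R * R -> Prop) : Prop :=
  (forall p, C p -> inG p) /\
  (forall p, C p -> exists u gam, admissible us uS u /\
      is_solution a b al be u p gam /\ forall t, 0 <= t -> C (gam t)) /\
  (forall p, C p -> forall q, C q -> in_closure (pos_orbit a b al be us uS p) q).

Definition control_set (a b al be us uS : R) (C : R * R -> Prop) : Prop :=
  cs_props a b al be us uS C /\
  forall D, cs_props a b al be us uS D -> (forall p, C p -> D p) ->
    forall p, D p <-> C p.

Definition nonempty_interior (C : R * R -> Prop) : Prop :=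
  exists p eps, 0 < eps /\ forall q,
    Rabs (fst q - fst p) < eps -> Rabs (snd q - snd p) < eps -> C q.

Definition ddir (Y : R * R -> R * R) (p v w : R * R) : Prop :=
  derivable_pt_lim (fun s => fst (Y (fst p + s * fst v, snd p + s * snd v))) 0 (fst w) /\
  derivable_pt_lim (fun s => snd (Y (fst p + s * fst v, snd p + s * snd v))) 0 (snd w).

(* The Lie algebra of vector fields on G generated by f_u, u in Omega:
   smallest set containing the f_u and closed under linear combinations
   and Lie brackets [X,Y](p) = DY(p)X(p) - DX(p)Y(p) (values on G). *)
Inductive lie_gen (a b al be us uS : R) : (R * R -> R * R) -> Prop :=
| lg_gen : forall u Z, us <= u <= uS ->
    (forall p, inG p -> Z p = field a b al be u p) -> lie_gen a b al be us uS Z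
| lg_lin : forall X Y Z c d, lie_gen a b al be us uS X -> lie_gen a b al be us uS Y ->
    (forall p, inG p -> Z p = (c * fst (X p) + d * fst (Y p),
                               c * snd (X p) + d * snd (Y p))) ->
    lie_gen a b al be us uS Z
| lg_br : forall X Y Z, lie_gen a b al be us uS X -> lie_gen a b al be us uS Y ->
    (forall p, inG p -> exists dY dX, ddir Y p (X p) dY /\ ddir X p (Y p) dX /\
        Z p = (fst dY - fst dX, snd dY - snd dX)) ->
    lie_gen a b al be us uS Z.

Definition LARC (a b al be us uS : R) : Prop :=
  forall p, inG p -> exists X Y, lie_gen a b al be us uS X /\ lie_gen a b al be us uS Y /\
    fst (X p) * snd (Y p) - snd (X p) * fst (Y p) <> 0.

(* Main.v *)
Require Import Defs.
From Stdlib Require Import Reals List Lra Lia Psatz Classical.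
From Coquelicot Require Derive.
Open Scope R_scope.

Lemma dlim_local (f g : R -> R) t l d : 0 < d ->
  (forall s, Rabs (s - t) < d -> f s = g s) ->
  derivable_pt_lim f t l -> derivable_pt_lim g t l.
Proof.
  intros Hd E H eps Heps.
  destruct (H eps Heps) as [del Hdel].
  assert (Hm : 0 < Rmin del d) by (apply Rmin_pos; [apply cond_pos | lra]).
  exists (mkposreal _ Hm). intros h hnz hlt. simpl in hlt.
  rewrite <- (E (t + h)), <- (E t).
  - apply Hdel; auto. apply Rlt_le_trans with (1 := hlt), Rmin_l.
  - rewrite Rminus_diag, Rabs_R0; lra.
  - replace (t + h - t) with h by ring.
    apply Rlt_le_trans with (1 := hlt), Rmin_r.
Qed.

Lemma dlim_glue (f g1 g2 : R -> R) T l :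
  (forall s, s <= T -> f s = g1 s) -> (forall s, T <= s -> f s = g2 s) ->
  derivable_pt_lim g1 T l -> derivable_pt_lim g2 T l -> derivable_pt_lim f T l.
Proof.
  intros E1 E2 H1 H2 eps Heps.
  destruct (H1 eps Heps) as [d1 Hd1]. destruct (H2 eps Heps) as [d2 Hd2].
  assert (Hm : 0 < Rmin d1 d2) by (apply Rmin_pos; apply cond_pos).
  exists (mkposreal _ Hm). intros h hnz hlt. simpl in hlt.
  destruct (Rle_dec h 0).
  - rewrite (E1 (T+h)) by lra. rewrite (E1 T) by lra. apply Hd1; auto.
    apply Rlt_le_trans with (1 := hlt), Rmin_l.
  - rewrite (E2 (T+h)) by lra. rewrite (E2 T) by lra. apply Hd2; auto.
    apply Rlt_le_trans with (1 := hlt), Rmin_r.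
Qed.

Lemma dlim_shift (g : R -> R) T t l :
  derivable_pt_lim g (t - T) l -> derivable_pt_lim (fun s => g (s - T)) t l.
Proof.
  intros H eps Heps. destruct (H eps Heps) as [d Hd]. exists d.
  intros h hnz hlt. replace (t + h - T) with (t - T + h) by ring. apply Hd; auto.
Qed.

Lemma dlim_unique_zero (f : R -> R) l d : 0 < d ->
  (forall s, Rabs s < d -> f s = 0) -> derivable_pt_lim f 0 l -> l = 0.
Proof.
  intros Hd E H.
  destruct (Req_dec l 0) as [|Hl]; auto. exfalso.
  assert (He : 0 < Rabs l) by (apply Rabs_pos_lt; auto).
  destruct (H _ He) as [del Hdel].
  set (h := Rmin (del/2) (d/2)).
  assert (Hh : 0 < h) by (apply Rmin_pos; pose proof (cond_pos del); lra).
  assert (Hh1 : h <= del/2) by apply Rmin_l. assert (Hh2 : h <= d/2) by apply Rmin_r.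
  assert (Hh3 : h <> 0) by lra.
  specialize (Hdel h Hh3). rewrite Rabs_pos_eq in Hdel by lra.
  pose proof (cond_pos del).
  rewrite (E (0 + h)), (E 0) in Hdel.
  - replace ((0 - 0) / h - l) with (- l) in Hdel by (field; auto).
    rewrite Rabs_Ropp in Hdel. lra.
  - rewrite Rabs_R0; lra.
  - rewrite Rplus_0_l, Rabs_pos_eq; lra.
Qed.

Lemma cont_glue (g1 g2 : R -> R) T :
  (forall t, continuity_pt g1 t) -> (forall t, continuity_pt g2 t) -> g1 T = g2 T ->
  forall t, continuity_pt (fun s => if Rle_dec s T then g1 s else g2 s) t.
Proof.
  intros C1 C2 E t.
  assert (Eq : forall s, (if Rle_dec s T then g1 s else g2 s) =
     g1 (Rmin s T) + g2 (Rmax s T) - g1 T).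
  { intro s. unfold Rmin, Rmax. destruct (Rle_dec s T); lra. }
  apply continuity_pt_locally_ext with (a := 1) (f := fun s => g1 (Rmin s T) + g2 (Rmax s T) - g1 T).
  lra. intros; symmetry; apply Eq.
  assert (CM : forall t, continuity_pt (fun s => Rmin s T) t).
  { intro t0. apply continuity_pt_locally_ext with (a:=1) (f := fun s => (s + T - Rabs (s - T))/2). lra.
    intros y _. unfold Rmin. destruct (Rle_dec y T).
    rewrite Rabs_left1 by lra. field. rewrite Rabs_pos_eq by lra. field.
    apply continuity_pt_mult. apply continuity_pt_minus. apply continuity_pt_plus.
    apply derivable_continuous_pt, derivable_pt_id. apply continuity_pt_const; intros ? ?; auto.
    apply (continuity_pt_comp (fun s => s - T) Rabs). apply continuity_pt_minus.
    apply derivable_continuous_pt, derivable_pt_id. apply continuity_pt_const; intros ? ?; auto.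
    apply Rcontinuity_abs. apply continuity_pt_const; intros ? ?; auto. }
  assert (CX : forall t, continuity_pt (fun s => Rmax s T) t).
  { intro t0. apply continuity_pt_locally_ext with (a:=1) (f := fun s => (s + T + Rabs (s - T))/2). lra.
    intros y _. unfold Rmax. destruct (Rle_dec y T).
    rewrite Rabs_left1 by lra. field. rewrite Rabs_pos_eq by lra. field.
    apply continuity_pt_mult. apply continuity_pt_plus. apply continuity_pt_plus.
    apply derivable_continuous_pt, derivable_pt_id. apply continuity_pt_const; intros ? ?; auto.
    apply (continuity_pt_comp (fun s => s - T) Rabs). apply continuity_pt_minus.
    apply derivable_continuous_pt, derivable_pt_id. apply continuity_pt_const; intros ? ?; auto.
    apply Rcontinuity_abs. apply continuity_pt_const; intros ? ?; auto. }
  apply continuity_pt_minus. apply continuity_pt_plus.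
  apply (continuity_pt_comp (fun s => Rmin s T) g1); auto.
  apply (continuity_pt_comp (fun s => Rmax s T) g2); auto.
  apply continuity_pt_const; intros ? ?; auto.
Qed.

Lemma dscal c f t l : derivable_pt_lim f t l -> derivable_pt_lim (fun s => c * f s) t (c*l).
Proof. intros H. exact (derivable_pt_lim_scal f c t l H). Qed.
Lemma dplus f g t l1 l2 : derivable_pt_lim f t l1 -> derivable_pt_lim g t l2 ->
  derivable_pt_lim (fun s => f s + g s) t (l1 + l2).
Proof. intros H1 H2. exact (derivable_pt_lim_plus f g t l1 l2 H1 H2). Qed.
Lemma dminus f g t l1 l2 : derivable_pt_lim f t l1 -> derivable_pt_lim g t l2 ->
  derivable_pt_lim (fun s => f s - g s) t (l1 - l2).
Proof. intros H1 H2. exact (derivable_pt_lim_minus f g t l1 l2 H1 H2). Qed.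
Lemma dmult f g t l1 l2 : derivable_pt_lim f t l1 -> derivable_pt_lim g t l2 ->
  derivable_pt_lim (fun s => f s * g s) t (l1 * g t + f t * l2).
Proof. intros H1 H2. exact (derivable_pt_lim_mult f g t l1 l2 H1 H2). Qed.
Lemma dconst c t : derivable_pt_lim (fun _ => c) t 0.
Proof. exact (derivable_pt_lim_const c t). Qed.
Lemma did t : derivable_pt_lim (fun s => s) t 1.
Proof. exact (derivable_pt_lim_id t). Qed.
Lemma dext f l1 l2 t : l1 = l2 -> derivable_pt_lim f t l1 -> derivable_pt_lim f t l2.
Proof. intros ->; auto. Qed.

Definition EE (mu t : R) : R := if Req_EM_T mu 0 then t else (exp (mu*t) - 1)/mu.

Lemma dexp_lin c t : derivable_pt_lim (fun s => exp (c*s)) t (c * exp (c*t)).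
Proof.
  assert (H := derivable_pt_lim_comp (fun s => c * s) exp t c (exp (c*t))).
  unfold comp in H. replace (c * exp (c*t)) with (exp (c*t) * c) by ring. apply H.
  apply (dext _ (c*1)). ring. apply dscal, did.
  apply derivable_pt_lim_exp.
Qed.

Lemma EE_deriv mu t : derivable_pt_lim (EE mu) t (exp (mu*t)).
Proof.
  unfold EE. destruct (Req_EM_T mu 0) as [->|Hm].
  - rewrite Rmult_0_l, exp_0. apply derivable_pt_lim_id.
  - eapply dext. 2: { apply (dmult (fun s => exp (mu*s) - 1) (fun _ => /mu)).
      apply dminus. apply dexp_lin. apply dconst. apply dconst. }
    field; auto.
Qed.

Lemma EE_id mu t : mu * EE mu t = exp (mu*t) - 1.
Proof.
  unfold EE. destruct (Req_EM_T mu 0) as [->|Hm].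
  - rewrite !Rmult_0_l, exp_0; ring.
  - field; auto.
Qed.

Lemma EE_0 mu : EE mu 0 = 0.
Proof. unfold EE. destruct (Req_EM_T mu 0). auto. rewrite Rmult_0_r, exp_0. field; auto. Qed.

Lemma EE_mu0 t : EE 0 t = t.
Proof. unfold EE. destruct (Req_EM_T 0 0); auto. lra. Qed.

Definition flow (a b al be v : R) (p : R*R) (t : R) : R*R :=
  (fst p * exp (v*al*t),
   exp (b*t) * (snd p + (a + v*be) * fst p * EE (v*al - b) t - a * EE (-b) t)).

Lemma flow_0 a b al be v p : flow a b al be v p 0 = p.
Proof. destruct p. unfold flow; simpl. rewrite !Rmult_0_r, exp_0, !EE_0. f_equal; ring. Qed.

Lemma flow_dx a b al be v p t :
  derivable_pt_lim (fun s => fst (flow a b al be v p s)) t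
    (fst (field a b al be v (flow a b al be v p t))).
Proof.
  unfold flow, field; simpl.
  apply (dext _ (fst p * (v*al * exp (v*al*t)))). ring.
  apply dscal. apply dexp_lin.
Qed.

Lemma flow_dy a b al be v p t :
  derivable_pt_lim (fun s => snd (flow a b al be v p s)) t
    (snd (field a b al be v (flow a b al be v p t))).
Proof.
  unfold flow, field; simpl.
  set (A := fun s => snd p + (a + v*be) * fst p * EE (v*al - b) s - a * EE (-b) s).
  assert (HA : derivable_pt_lim A t ((a + v*be) * fst p * exp ((v*al - b)*t) - a * exp (-b*t))).
  { unfold A. apply dminus. 
    apply (dext _ (0 + (a + v*be) * fst p * exp ((v*al - b)*t))). ring.
    apply dplus. apply dconst.
    apply dscal. apply EE_deriv.
    apply dscal. apply EE_deriv. }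
  assert (H := dmult (fun s => exp (b*s)) A t _ _ (dexp_lin b t) HA).

  match goal with |- derivable_pt_lim ?f _ ?l => 
    replace l with (b * exp (b * t) * A t + exp (b * t) * ((a + v*be) * fst p * exp ((v*al - b)*t) - a * exp (-b*t))) end.
  exact H.
  cbv beta. unfold A.
  replace ((v*al - b)*t) with (v*al*t + -(b*t)) by ring.
  replace (-b*t) with (-(b*t)) by ring.
  rewrite exp_plus, exp_Ropp.
  assert (exp (b*t) > 0) by apply exp_pos.
  field. lra.
Qed.

Lemma const_adm us uS v : us <= v <= uS -> admissible us uS (fun _ => v).
Proof.
  intros H. split. intros t0 t1. exists nil. intros; auto. intros; auto.
Qed.

Lemma flow_sol a b al be v p : is_solution a b al be (fun _ => v) p (flow a b al be v p).
Proof.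
  split; [apply flow_0|]. split.
  - intro t. split; apply derivable_continuous_pt; eexists; [apply flow_dx | apply flow_dy].
  - intros t _. split; [apply flow_dx | apply flow_dy].
Qed.

Fixpoint ctrl (l : list (R*R)) (t : R) : R :=
  match l with
  | nil => 0
  | (v,tau) :: r => if Rlt_dec 0 tau then (if Rlt_dec t tau then v else ctrl r (t - tau))
                    else ctrl r t
  end.

Fixpoint traj (a b al be : R) (l : list (R*R)) (p : R*R) (t : R) : R*R :=
  match l with
  | nil => flow a b al be 0 p t
  | (v,tau) :: r => if Rlt_dec 0 tau then
        (if Rle_dec t tau then flow a b al be v p t else traj a b al be r (flow a b al be v p tau) (t - tau))
                    else traj a b al be r p t
  end.

Fixpoint endp (a b al be : R) (l : list (R*R)) (p : R*R) : R*R :=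
  match l with
  | nil => p
  | (v,tau) :: r => if Rlt_dec 0 tau then endp a b al be r (flow a b al be v p tau)
                    else endp a b al be r p
  end.

Fixpoint total (l : list (R*R)) : R :=
  match l with
  | nil => 0
  | (v,tau) :: r => if Rlt_dec 0 tau then tau + total r else total r
  end.

Lemma total_nonneg l : 0 <= total l.
Proof. induction l as [|[v tau] r IH]; simpl. lra. destruct (Rlt_dec 0 tau); lra. Qed.

Lemma ctrl_init l : exists e, 0 < e /\ forall s, s < e -> ctrl l s = ctrl l 0.
Proof.
  induction l as [|[v tau] r IH]; simpl.
  - exists 1; split; auto; lra.
  - destruct (Rlt_dec 0 tau).
    + exists tau; split; auto. intros s Hs. destruct (Rlt_dec s tau); [|lra].
      destruct (Rlt_dec 0 tau); [auto|lra].
    + auto.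
Qed.

Lemma traj_0 a b al be l p : traj a b al be l p 0 = p.
Proof.
  revert p; induction l as [|[v tau] r IH]; intros p; simpl.
  - apply flow_0.
  - destruct (Rlt_dec 0 tau). destruct (Rle_dec 0 tau). apply flow_0. lra. auto.
Qed.

Definition inOmega (us uS : R) (l : list (R*R)) := forall ph, In ph l -> us <= fst ph <= uS.

Lemma traj_sol a b al be us uS l p : us <= 0 <= uS -> inOmega us uS l ->
  admissible us uS (ctrl l) /\ is_solution a b al be (ctrl l) p (traj a b al be l p).
Proof.
  intros H0. revert p; induction l as [|[v tau] r IH]; intros p Hl.
  - split. apply const_adm; auto. apply flow_sol.
  - assert (Hv : us <= v <= uS) by (apply (Hl (v,tau)); left; auto).
    assert (Hr : inOmega us uS r) by (intros ph Hph; apply Hl; right; auto).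
    simpl. destruct (Rlt_dec 0 tau) as [Ht|Ht]; [|apply IH; auto].
    set (p' := flow a b al be v p tau).
    destruct (IH p' Hr) as [[Hpc Hb] [Hs0 [Hcont Hder]]].
    set (u' := ctrl r) in *. set (g' := traj a b al be r p') in *.
    split; [split|].
    + intros t0 t1. destruct (Hpc (t0 - tau) (t1 - tau)) as [l' Hl'].
      exists (tau :: map (fun c => c + tau) l'). intros s1 s2 H1 H12 H2 Hc.
      destruct (Hc tau (or_introl eq_refl)) as [Hs|Hs].
      * destruct (Rlt_dec s1 tau); [lra|]. destruct (Rlt_dec s2 tau); [lra|].
        apply Hl'; try lra. intros c Hcin.
        destruct (Hc (c + tau)) as [Hq|Hq]; [right; apply (in_map (fun c0 => c0 + tau)); auto| left; lra | right; lra].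
      * destruct (Rlt_dec s1 tau); [|lra]. destruct (Rlt_dec s2 tau); [auto|lra].
    + intros t. destruct (Rlt_dec t tau); auto. 
    + split; [|split].
      * destruct (Rle_dec 0 tau); [apply flow_0|lra].
      * intros t.
        assert (E1 : forall s, (if Rle_dec s tau then flow a b al be v p s else g' (s - tau)) =
          (if Rle_dec s tau then flow a b al be v p s else g' (s - tau))) by auto.
        split.
        -- apply continuity_pt_locally_ext with (a := 1)
             (f := fun s => if Rle_dec s tau then fst (flow a b al be v p s) else fst (g' (s - tau))).
           lra. intros y _. destruct (Rle_dec y tau); auto.
           apply cont_glue.
           ++ intro t'. apply derivable_continuous_pt; eexists; apply flow_dx.
           ++ intro t'. apply (continuity_pt_comp (fun s => s - tau) (fun s => fst (g' s))).
              apply continuity_pt_minus. apply derivable_continuous_pt, derivable_pt_id.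
              apply continuity_pt_const; intros ? ?; auto. apply Hcont.
           ++ rewrite Rminus_diag, Hs0. auto.
        -- apply continuity_pt_locally_ext with (a := 1)
             (f := fun s => if Rle_dec s tau then snd (flow a b al be v p s) else snd (g' (s - tau))).
           lra. intros y _. destruct (Rle_dec y tau); auto.
           apply cont_glue.
           ++ intro t'. apply derivable_continuous_pt; eexists; apply flow_dy.
           ++ intro t'. apply (continuity_pt_comp (fun s => s - tau) (fun s => snd (g' s))).
              apply continuity_pt_minus. apply derivable_continuous_pt, derivable_pt_id.
              apply continuity_pt_const; intros ? ?; auto. apply Hcont.
           ++ rewrite Rminus_diag, Hs0. auto.
      * intros t [d [Hd Hloc]].
        set (G := fun s => if Rle_dec s tau then flow a b al be v p s else g' (s - tau)).
        assert (GL : forall s, s <= tau -> G s = flow a b al be v p s).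
        { intros s Hs; unfold G; destruct (Rle_dec s tau); [auto|lra]. }
        assert (GR : forall s, tau <= s -> G s = g' (s - tau)).
        { intros s Hs; unfold G; destruct (Rle_dec s tau); [|auto].
          assert (s = tau) by lra. subst s. rewrite Rminus_diag, Hs0. auto. }
        assert (UL : forall s, s < tau -> (if Rlt_dec s tau then v else u' (s - tau)) = v).
        { intros s Hs; destruct (Rlt_dec s tau); [auto|lra]. }
        assert (UR : forall s, tau <= s -> (if Rlt_dec s tau then v else u' (s - tau)) = u' (s - tau)).
        { intros s Hs; destruct (Rlt_dec s tau); [lra|auto]. }
        change (derivable_pt_lim (fun s => fst (G s)) t
                  (fst (field a b al be (if Rlt_dec t tau then v else u' (t - tau)) (G t))) /\
                derivable_pt_lim (fun s => snd (G s)) t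
                  (snd (field a b al be (if Rlt_dec t tau then v else u' (t - tau)) (G t)))).
        destruct (Rtotal_order t tau) as [Hlt|[Heq|Hgt]].
        -- rewrite UL, GL by lra.
           split; eapply dlim_local with (d := tau - t); try lra;
             [ | apply flow_dx | | apply flow_dy];
             intros s Hs; rewrite GL; auto; apply Rabs_def2 in Hs; lra.
        -- subst t.
           assert (Huv : u' 0 = v).
           { assert (Hd2 : Rabs ((tau - d/2) - tau) < d) by (rewrite Rabs_left; lra).
             pose proof (Hloc _ Hd2) as E. rewrite UL in E by lra. rewrite UR in E by lra.
             rewrite Rminus_diag in E. auto. }
           destruct (ctrl_init r) as [e [He He']].
           assert (Hl0 : exists d0, 0 < d0 /\ forall s, Rabs (s - 0) < d0 -> u' s = u' 0).
           { exists e; split; auto. intros s Hs. apply He'. apply Rabs_def2 in Hs; lra. }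
           destruct (Hder 0 Hl0) as [Dx Dy].
           rewrite UR by lra. rewrite Rminus_diag, Huv in *. rewrite GL by lra.
           assert (Hp : g' 0 = flow a b al be v p tau) by (rewrite Hs0; auto).
           split.
           ++ apply (dlim_glue _ (fun s => fst (flow a b al be v p s)) (fun s => fst (g' (s - tau)))).
              intros s Hs; rewrite GL; auto. intros s Hs; rewrite GR; auto.
              apply flow_dx. apply (dlim_shift (fun s => fst (g' s))). rewrite Rminus_diag. rewrite <- Hp. auto.
           ++ apply (dlim_glue _ (fun s => snd (flow a b al be v p s)) (fun s => snd (g' (s - tau)))).
              intros s Hs; rewrite GL; auto. intros s Hs; rewrite GR; auto.
              apply flow_dy. apply (dlim_shift (fun s => snd (g' s))). rewrite Rminus_diag. rewrite <- Hp. auto.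
        -- rewrite UR, GR by lra.
           assert (Hl0 : exists d0, 0 < d0 /\ forall s, Rabs (s - (t - tau)) < d0 -> u' s = u' (t - tau)).
           { exists (Rmin d (t - tau)); split. apply Rmin_pos; lra.
             intros s Hs. assert (Hs1 : Rabs (s - (t - tau)) < d) by (eapply Rlt_le_trans; [apply Hs| apply Rmin_l]).
             assert (Hs2 : Rabs (s - (t - tau)) < t - tau) by (eapply Rlt_le_trans; [apply Hs| apply Rmin_r]).
             apply Rabs_def2 in Hs2.
             assert (Hs3 : Rabs ((s + tau) - t) < d) by (replace (s + tau - t) with (s - (t - tau)) by ring; auto).
             pose proof (Hloc _ Hs3) as E. rewrite !UR in E by lra.
             replace (s + tau - tau) with s in E by ring. auto. }
           destruct (Hder _ Hl0) as [Dx Dy].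
           split; eapply dlim_local with (d := t - tau); try lra;
             [ | apply (dlim_shift (fun s => fst (g' s))); apply Dx | | apply (dlim_shift (fun s => snd (g' s))); apply Dy];
             intros s Hs; apply Rabs_def2 in Hs; rewrite GR; auto; lra.
Qed.

Lemma traj_end a b al be l p : traj a b al be l p (total l) = endp a b al be l p.
Proof.
  revert p; induction l as [|[v tau] r IH]; intros p; simpl.
  - apply flow_0.
  - destruct (Rlt_dec 0 tau); auto.
    destruct (Rle_dec (tau + total r) tau).
    + assert (total r = 0) by (pose proof (total_nonneg r); lra).
      rewrite <- IH. rewrite H, traj_0. f_equal; ring.
    + rewrite <- IH. f_equal. ring.
Qed.

Lemma reach_endp a b al be us uS l p : us <= 0 <= uS -> inOmega us uS l ->
  pos_orbit a b al be us uS p (endp a b al be l p).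
Proof.
  intros H0 Hl. destruct (traj_sol a b al be us uS l p H0 Hl) as [Ha Hs].
  exists (ctrl l), (traj a b al be l p), (total l).
  split; [auto|split;[auto|split;[apply total_nonneg|apply traj_end]]].
Qed.

Definition inb (a b c : R) : bool :=
  if Rlt_dec a c then (if Rlt_dec c b then true else false) else false.

Lemma filter_lt (P Q : R -> bool) (L : list R) c :
  (forall x, P x = true -> Q x = true) -> In c L -> P c = false -> Q c = true ->
  (length (filter P L) < length (filter Q L))%nat.
Proof.
  intros HPQ. induction L as [|x L IH]; simpl; [tauto|].
  intros [->|Hin] Hp Hq.
  - rewrite Hp, Hq. simpl.
    assert (forall L, (length (filter P L) <= length (filter Q L))%nat).
    { induction L0 as [|y L0 IH0]; simpl; auto. destruct (P y) eqn:E.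
      rewrite (HPQ y E). simpl. lia. destruct (Q y); simpl; lia. }
    specialize (H L). lia.
  - specialize (IH Hin Hp Hq). destruct (P x) eqn:E.
    rewrite (HPQ x E). simpl; lia. destruct (Q x); simpl; lia.
Qed.

Lemma mono_nolist (u h : R -> R) a b :
  a <= b -> (forall t, a <= t <= b -> continuity_pt h t) ->
  (forall t, a < t < b -> (exists d, 0 < d /\ forall s, Rabs (s - t) < d -> u s = u t) ->
     exists l, derivable_pt_lim h t l /\ 0 <= l) ->
  (forall t, a < t < b -> exists d, 0 < d /\ forall s, Rabs (s - t) < d -> u s = u t) ->
  h a <= h b.
Proof.
  intros Hab Hc Hd Hu.
  set (df := fun t => Rmax 0 (Derive.Derive h t)).
  destruct (Derive.MVT_gen h a b df) as [c [Hc1 Hc2]].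
  - intros x Hx. rewrite Rmin_left, Rmax_right in Hx by lra.
    destruct (Hd x Hx (Hu x Hx)) as [l [Hl Hl0]].
    apply Derive.is_derive_Reals in Hl.
    unfold df. rewrite (Derive.is_derive_unique _ _ _ Hl). rewrite Rmax_right by lra. auto.
  - intros x Hx. rewrite Rmin_left, Rmax_right in Hx by lra. auto.
  - assert (0 <= df c) by (unfold df; apply Rmax_l).
    assert (0 <= df c * (b - a)) by (apply Rmult_le_pos; lra). lra.
Qed.

Lemma mono (u h : R -> R) t0 t1 :
  piecewise_constant u -> t0 <= t1 -> (forall t, t0 <= t <= t1 -> continuity_pt h t) ->
  (forall t, t0 < t < t1 -> (exists d, 0 < d /\ forall s, Rabs (s - t) < d -> u s = u t) ->
     exists l, derivable_pt_lim h t l /\ 0 <= l) ->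
  h t0 <= h t1.
Proof.
  intros Hpc H01 Hc Hd. destruct (Hpc t0 t1) as [L HL].
  assert (Main : forall n a b, t0 <= a -> a <= b -> b <= t1 ->
     (length (filter (inb a b) L) <= n)%nat -> h a <= h b).
  { induction n as [|n IH]; intros a b Ha Hab Hb Hn.
    - apply (mono_nolist u h a b Hab).
      + intros; apply Hc; lra.
      + intros; apply Hd; auto; lra.
      + intros t Ht. exists (Rmin (t - a) (b - t)). split. apply Rmin_pos; lra.
        intros s Hs. assert (H1 : Rabs (s - t) < t - a) by (eapply Rlt_le_trans; [apply Hs|apply Rmin_l]).
        assert (H2 : Rabs (s - t) < b - t) by (eapply Rlt_le_trans; [apply Hs|apply Rmin_r]).
        apply Rabs_def2 in H1. apply Rabs_def2 in H2.
        assert (Hnone : forall c, In c L -> c <= a \/ b <= c).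
        { intros c Hcin. destruct (Rle_dec c a); auto. destruct (Rle_dec b c); auto.
          exfalso. assert (inb a b c = true) by (unfold inb; destruct (Rlt_dec a c); [|lra]; destruct (Rlt_dec c b); auto; lra).
          assert (In c (filter (inb a b) L)) by (apply filter_In; auto).
          destruct (filter (inb a b) L); simpl in *; [auto|lia]. }
        destruct (Rle_dec s t).
        * apply HL; try lra. intros c Hcin; destruct (Hnone c Hcin); lra.
        * symmetry; apply HL; try lra. intros c Hcin; destruct (Hnone c Hcin); lra.
    - destruct (classic (exists c, In c L /\ a < c < b)) as [[c [Hcin Hcab]]|Hno].
      + apply Rle_trans with (h c).
        * apply IH; try lra.
          assert (length (filter (inb a c) L) < length (filter (inb a b) L))%nat.
          { apply filter_lt with c; auto.
            - intros x. unfold inb. destruct (Rlt_dec a x); try discriminate.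
              destruct (Rlt_dec x c); try discriminate. intros _.
              destruct (Rlt_dec x b); auto; lra.
            - unfold inb. destruct (Rlt_dec a c); auto. destruct (Rlt_dec c c); auto; lra.
            - unfold inb. destruct (Rlt_dec a c); [|lra]. destruct (Rlt_dec c b); auto; lra. }
          lia.
        * apply IH; try lra.
          assert (length (filter (inb c b) L) < length (filter (inb a b) L))%nat.
          { apply filter_lt with c; auto.
            - intros x. unfold inb. destruct (Rlt_dec c x); try discriminate.
              destruct (Rlt_dec x b); try discriminate. intros _.
              destruct (Rlt_dec a x); auto; lra.
            - unfold inb. destruct (Rlt_dec c c); auto; lra.
            - unfold inb. destruct (Rlt_dec a c); [|lra]. destruct (Rlt_dec c b); auto; lra. }
          lia.
      + apply IH; auto.
        assert (filter (inb a b) L = nil).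
        { destruct (filter (inb a b) L) as [|c l0] eqn:E; auto. exfalso.
          assert (In c (filter (inb a b) L)) by (rewrite E; left; auto).
          apply filter_In in H as [Hin Hi]. apply Hno. exists c. split; auto.
          unfold inb in Hi. destruct (Rlt_dec a c); try discriminate. destruct (Rlt_dec c b); try discriminate. lra. }
        rewrite H. simpl. lia. }
  apply (Main (length (filter (inb t0 t1) L))); lra || lia.
Qed.

Lemma lam_bounds us uS al v : us <= v <= uS ->
  Rmin (us*al) (uS*al) <= v*al <= Rmax (us*al) (uS*al).
Proof.
  intros H. unfold Rmin, Rmax.
  destruct (Rle_dec (us*al) (uS*al)); destruct (Rle_lt_dec 0 al); split; nra.
Qed.

Lemma sol_cont_x a b al be u p gam : is_solution a b al be u p gam ->
  forall t, continuity_pt (fun s => fst (gam s)) t.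
Proof. intros [_ [H _]] t. apply H. Qed.
Lemma sol_cont_y a b al be u p gam : is_solution a b al be u p gam ->
  forall t, continuity_pt (fun s => snd (gam s)) t.
Proof. intros [_ [H _]] t. apply H. Qed.

Lemma cont_exp_lin c t : continuity_pt (fun s => exp (c*s)) t.
Proof. apply derivable_continuous_pt. eexists. apply dexp_lin. Qed.

Lemma sol_deriv_aff a b al be u p gam (al0 be0 ga : R) t :
  is_solution a b al be u p gam ->
  (exists d, 0 < d /\ forall s, Rabs (s - t) < d -> u s = u t) ->
  derivable_pt_lim (fun s => al0 * fst (gam s) + be0 * snd (gam s) + ga) t
    (al0 * (u t * al * fst (gam t)) + be0 * (a * (fst (gam t) - 1) + b * snd (gam t) + u t * fst (gam t) * be)).
Proof.
  intros [_ [_ Hd]] Hl. destruct (Hd t Hl) as [Dx Dy]. unfold field in Dx, Dy; simpl in Dx, Dy.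
  eapply dext. 2: { apply dplus. apply dplus. apply dscal. apply Dx. apply dscal. apply Dy. apply dconst. }
  ring.
Qed.

Lemma sol_pos a b al be us uS u p gam : inG p -> admissible us uS u ->
  is_solution a b al be u p gam -> forall t, 0 <= t -> 0 < fst (gam t).
Proof.
  intros Hp [Hpc Hb] Hs.
  set (lm := Rmin (us*al) (uS*al)).
  assert (Key : forall t, 0 <= t -> (fst p)^2 <= (fst (gam t))^2 * exp (-2*lm*t)).
  { intros t Ht.
    assert (E0 : (fst p)^2 = (fst (gam 0))^2 * exp (-2*lm*0)).
    { destruct Hs as [H0 _]. rewrite H0, Rmult_0_r, exp_0. ring. }
    rewrite E0. apply (mono u (fun s => (fst (gam s))^2 * exp (-2*lm*s))); auto.
    - intros s _. apply continuity_pt_mult. 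
      apply (continuity_pt_mult (fun s => fst (gam s)) (fun s => fst (gam s) * 1)).
      apply (sol_cont_x _ _ _ _ _ _ _ Hs).
      apply (continuity_pt_mult (fun s => fst (gam s)) (fun s => 1)).
      apply (sol_cont_x _ _ _ _ _ _ _ Hs). apply continuity_pt_const; intros ? ?; auto.
      apply cont_exp_lin.
    - intros s Hs1 Hl. destruct Hs as [_ [_ Hd]]. destruct (Hd s Hl) as [Dx _].
      unfold field in Dx; simpl in Dx.
      eexists. split.
      + apply dmult. apply (dmult (fun s => fst (gam s)) (fun s => fst (gam s) * 1)). apply Dx.
        apply (dmult (fun s => fst (gam s)) (fun s => 1)). apply Dx. apply dconst. apply dexp_lin.
      + pose proof (lam_bounds us uS al (u s) (Hb s)) as [Hl1 _]. fold lm in Hl1.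
        pose proof (exp_pos (-2*lm*s)).
        assert (0 <= (fst (gam s))^2) by (apply pow2_ge_0).
        match goal with |- 0 <= ?L => replace L with (2 * (fst (gam s))^2 * exp (-2 * lm * s) * (u s * al - lm)) by ring end.
        assert (0 <= 2 * fst (gam s) ^ 2 * exp (-2 * lm * s)) by (apply Rmult_le_pos; lra).
        apply Rmult_le_pos; lra. }
  assert (NZ : forall t, 0 <= t -> fst (gam t) <> 0).
  { intros t Ht Hz. specialize (Key t Ht). rewrite Hz in Key.
    unfold inG in Hp. assert (0 < (fst p)^2) by (apply pow_lt; auto). 
    replace (0^2 * exp (-2*lm*t)) with 0 in Key by ring. lra. }
  intros t Ht. destruct (Rlt_le_dec 0 (fst (gam t))) as [|Hle]; auto.
  destruct (Req_dec (fst (gam t)) 0) as [Hz|Hz]; [exfalso; apply (NZ t); auto|].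
  assert (Hneg : fst (gam t) < 0) by lra.
  assert (Htp : 0 < t). { destruct (Req_dec t 0) as [->|]; [|lra]. destruct Hs as [H0 _].
    rewrite H0 in Hneg. unfold inG in Hp. lra. }
  destruct (Ranalysis5.IVT_interv (fun s => - fst (gam s)) 0 t) as [z [Hz1 Hz2]]; auto.
  - intros s _. apply continuity_pt_opp. apply (sol_cont_x _ _ _ _ _ _ _ Hs).
  - destruct Hs as [H0 _]. rewrite H0. unfold inG in Hp. simpl. lra.
  - simpl. lra.
  - exfalso. apply (NZ z); [lra|]. lra.
Qed.

Lemma lyap a b al be us uS (al0 be0 ga b0 : R) :
  (forall v x y, us <= v <= uS -> 0 < x ->
     al0*(v*al*x) + be0*(a*(x-1) + b*y + v*x*be) <= b0*(al0*x + be0*y + ga)) ->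
  forall u p gam, inG p -> admissible us uS u -> is_solution a b al be u p gam ->
  forall t, 0 <= t ->
  al0 * fst (gam t) + be0 * snd (gam t) + ga <= (al0 * fst p + be0 * snd p + ga) * exp (b0*t).
Proof.
  intros Hc u p gam Hp Ha Hs t Ht.
  set (phi := fun s => al0 * fst (gam s) + be0 * snd (gam s) + ga).
  assert (M : - (phi 0 * exp (-b0*0)) <= - (phi t * exp (-b0*t))).
  { apply (mono u (fun s => - (phi s * exp (-b0*s)))); auto. apply Ha.
    - intros s _. apply continuity_pt_opp. apply continuity_pt_mult; [|apply cont_exp_lin].
      unfold phi. apply continuity_pt_plus; [apply continuity_pt_plus|].
      apply (continuity_pt_scal (fun s => fst (gam s))). apply (sol_cont_x _ _ _ _ _ _ _ Hs).
      apply (continuity_pt_scal (fun s => snd (gam s))). apply (sol_cont_y _ _ _ _ _ _ _ Hs).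
      apply continuity_pt_const; intros ? ?; auto.
    - intros s Hs1 Hl. eexists. split.
      + apply (derivable_pt_lim_opp (fun s => phi s * exp (-b0*s))).
        apply dmult. apply (sol_deriv_aff _ _ _ _ _ _ _ _ _ _ _ Hs Hl). apply dexp_lin.
      + assert (Hx : 0 < fst (gam s)) by (apply (sol_pos a b al be us uS u p gam); auto; lra).
        pose proof (Hc (u s) (fst (gam s)) (snd (gam s)) (proj2 Ha s) Hx).
        pose proof (exp_pos (-b0*s)). unfold phi.
        match goal with |- 0 <= - (?A * ?E + ?P * (-b0 * ?E)) => 
          replace (- (A * E + P * (-b0 * E))) with (E * (b0 * P - A)) by ring end.
        apply Rmult_le_pos; lra. }
  replace (al0 * fst p + be0 * snd p + ga) with (phi 0).
  2: { unfold phi. destruct Hs as [H0 _]. rewrite H0. auto. }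
  change (phi t <= phi 0 * exp (b0*t)).
  rewrite Rmult_0_r, exp_0, Rmult_1_r in M.
  assert (H : phi t * exp (-b0*t) <= phi 0) by lra.
  assert (E : phi t * exp (-b0*t) * exp (b0*t) = phi t).
  { rewrite Rmult_assoc, <- exp_plus. replace (-b0*t + b0*t) with 0 by ring. rewrite exp_0; ring. }
  rewrite <- E. apply Rmult_le_compat_r; [left; apply exp_pos|auto].
Qed.

Lemma lin_decr a b al be us uS (al0 be0 ga K : R) (Q : R -> R*R -> Prop) u p gam t :
  inG p -> admissible us uS u -> is_solution a b al be u p gam -> 0 <= t ->
  (forall s, 0 <= s <= t -> Q s (gam s)) ->
  (forall s v x y, 0 <= s <= t -> Q s (x,y) -> us <= v <= uS -> 0 < x ->
     al0*(v*al*x) + be0*(a*(x-1) + b*y + v*x*be) <= - K) ->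
  al0 * fst (gam t) + be0 * snd (gam t) + ga + K * t <= al0 * fst p + be0 * snd p + ga.
Proof.
  intros Hp Ha Hs Ht HQ Hc.
  set (phi := fun s => al0 * fst (gam s) + be0 * snd (gam s) + ga).
  assert (M : - (phi 0 + K * 0) <= - (phi t + K*t)).
  { apply (mono u (fun s => - (phi s + K * s))); auto. apply Ha.
    - intros s _. apply continuity_pt_opp. apply continuity_pt_plus.
      unfold phi. apply continuity_pt_plus; [apply continuity_pt_plus|].
      apply (continuity_pt_scal (fun s => fst (gam s))). apply (sol_cont_x _ _ _ _ _ _ _ Hs).
      apply (continuity_pt_scal (fun s => snd (gam s))). apply (sol_cont_y _ _ _ _ _ _ _ Hs).
      apply continuity_pt_const; intros ? ?; auto.
      apply (continuity_pt_scal (fun s => s)). apply derivable_continuous_pt, derivable_pt_id.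
    - intros s Hs1 Hl. eexists. split.
      + apply (derivable_pt_lim_opp (fun s => phi s + K * s)).
        apply dplus. apply (sol_deriv_aff _ _ _ _ _ _ _ _ _ _ _ Hs Hl). apply dscal, did.
      + assert (Hx : 0 < fst (gam s)) by (apply (sol_pos a b al be us uS u p gam); auto; lra).
        assert (HQs : Q s (fst (gam s), snd (gam s))) by (rewrite <- surjective_pairing; apply HQ; lra).
        pose proof (Hc s (u s) (fst (gam s)) (snd (gam s)) ltac:(lra) HQs (proj2 Ha s) Hx). lra. }
  replace (al0 * fst p + be0 * snd p + ga) with (phi 0).
  2: { unfold phi. destruct Hs as [H0 _]. rewrite H0. auto. }
  unfold phi in *. lra.
Qed.

Lemma exp_lt1 x : x < 0 -> exp x < 1.
Proof. intros H. rewrite <- exp_0. apply exp_increasing; auto. Qed.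
Lemma exp_gt1 x : 0 < x -> 1 < exp x.
Proof. intros H. rewrite <- exp_0. apply exp_increasing; auto. Qed.
Lemma exp_le1 x : x <= 0 -> exp x <= 1.
Proof. intros H. destruct (Req_dec x 0) as [->|]. rewrite exp_0; lra. left; apply exp_lt1; lra. Qed.
Lemma exp_ge1 x : 0 <= x -> 1 <= exp x.
Proof. intros H. destruct (Req_dec x 0) as [->|]. rewrite exp_0; lra. left; apply exp_gt1; lra. Qed.

Definition aff (al0 be0 ga : R) (q : R*R) : R := al0 * fst q + be0 * snd q + ga.

Lemma Rabs_def2b x y : Rabs x <= y -> - y <= x <= y.
Proof. intros H. split; [|apply Rle_trans with (Rabs x); [apply Rle_abs|auto]].
  pose proof (Rabs_Ropp x). pose proof (Rle_abs (-x)). lra. Qed.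

Lemma closure_aff (S : R*R -> Prop) al0 be0 ga B q :
  (forall s, S s -> B <= aff al0 be0 ga s) -> in_closure S q -> B <= aff al0 be0 ga q.
Proof.
  intros HS Hc. destruct (Rle_dec B (aff al0 be0 ga q)) as [|Hn]; auto. exfalso.
  set (K := Rabs al0 + Rabs be0 + 1).
  assert (HK : 0 < K) by (unfold K; pose proof (Rabs_pos al0); pose proof (Rabs_pos be0); lra).
  set (eps := (B - aff al0 be0 ga q) / K).
  assert (He : 0 < eps) by (unfold eps; apply Rdiv_lt_0_compat; lra).
  destruct (Hc eps He) as [s [Hs [H1 H2]]].
  specialize (HS s Hs). unfold aff in *.
  assert (Rabs (al0 * (fst s - fst q)) <= Rabs al0 * eps) by (rewrite Rabs_mult; apply Rmult_le_compat_l; [apply Rabs_pos|lra]).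
  assert (Rabs (be0 * (snd s - snd q)) <= Rabs be0 * eps) by (rewrite Rabs_mult; apply Rmult_le_compat_l; [apply Rabs_pos|lra]).
  apply Rabs_def2b in H. apply Rabs_def2b in H0.
  assert (K * eps = B - (al0 * fst q + be0 * snd q + ga)) by (unfold eps; field; lra).
  unfold K in H3. pose proof (Rabs_pos al0). pose proof (Rabs_pos be0). nra.
Qed.



Lemma excl_gen a b al be us uS (al0 be0 ga : R) (P : R*R -> Prop) (Dset : R*R -> Prop) :
  cs_props a b al be us uS Dset ->
  (forall p, inG p -> P p -> forall u gam, admissible us uS u -> is_solution a b al be u p gam ->
     exists B, aff al0 be0 ga p < B /\
       forall u' gam' t, admissible us uS u' -> is_solution a b al be u' (gam 1) gam' -> 0 <= t ->
         B <= aff al0 be0 ga (gam' t)) ->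
  forall d, Dset d -> ~ P d.
Proof.
  intros [HG [Hi Hii]] H d Hd Hp.
  destruct (Hi d Hd) as [u [gam [Ha [Hs Hin]]]].
  destruct (H d (HG d Hd) Hp u gam Ha Hs) as [B [HB1 HB2]].
  assert (Hd' : Dset (gam 1)) by (apply Hin; lra).
  pose proof (Hii (gam 1) Hd' d Hd) as Hcl.
  assert (B <= aff al0 be0 ga d).
  { apply (closure_aff (pos_orbit a b al be us uS (gam 1))); [|exact Hcl].
    intros s Hso. destruct Hso as [u' [g' [t [Ha' [Hs' [Ht Heq]]]]]]. subst s. apply (HB2 u' g' t); auto. }
  lra.
Qed.

Lemma excl_le a b al be us uS (al0 be0 ga b0 : R) Dset : b0 < 0 ->
  (forall v x y, us <= v <= uS -> 0 < x ->
     al0*(v*al*x) + be0*(a*(x-1) + b*y + v*x*be) <= b0*(al0*x + be0*y + ga)) ->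
  cs_props a b al be us uS Dset -> forall d, Dset d -> aff al0 be0 ga d <= 0.
Proof.
  intros Hb0 Hc Hcs d Hd.
  destruct (Rle_dec (aff al0 be0 ga d) 0) as [|Hn]; auto. exfalso.
  apply (excl_gen a b al be us uS (-al0) (-be0) (-ga) (fun p => 0 < aff al0 be0 ga p) Dset Hcs) with d; auto; [|lra].
  intros p Hp Hpos u gam Ha Hs.
  pose proof (lyap a b al be us uS al0 be0 ga b0 Hc u p gam Hp Ha Hs 1 ltac:(lra)) as H1.
  assert (He : exp (b0*1) < 1) by (apply exp_lt1; lra).
  exists (- Rmax (aff al0 be0 ga p * exp (b0*1)) 0). split.
  - pose proof (exp_pos (b0*1)).
    assert (Rmax (aff al0 be0 ga p * exp (b0*1)) 0 < aff al0 be0 ga p).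
    { apply Rmax_lub_lt; [|lra]. nra. }
    unfold aff in *; lra.
  - intros u' gam' t Ha' Hs' Ht.
    assert (Hp1 : inG (gam 1)) by (unfold inG; apply (sol_pos a b al be us uS u p gam); auto; lra).
    pose proof (lyap a b al be us uS al0 be0 ga b0 Hc u' (gam 1) gam' Hp1 Ha' Hs' t Ht) as H2.
    assert (He2 : exp (b0*t) <= 1) by (apply exp_le1; nra).
    pose proof (exp_pos (b0*t)).
    assert (aff al0 be0 ga (gam' t) <= Rmax (aff al0 be0 ga p * exp (b0*1)) 0).
    { unfold aff in *. revert H1 H2. generalize (al0 * fst (gam 1) + be0 * snd (gam 1) + ga). intros z H1 H2.
      apply Rle_trans with (z * exp (b0*t)); auto.
      destruct (Rle_dec 0 z).
      - apply Rle_trans with z. nra. apply Rle_trans with (2 := Rmax_l _ _). lra.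
      - apply Rle_trans with 0. nra. apply Rmax_r. }
    unfold aff in *. lra.
Qed.

Lemma excl_ge a b al be us uS (al0 be0 ga b0 : R) Dset : 0 < b0 ->
  (forall v x y, us <= v <= uS -> 0 < x ->
     b0*(al0*x + be0*y + ga) <= al0*(v*al*x) + be0*(a*(x-1) + b*y + v*x*be)) ->
  cs_props a b al be us uS Dset -> forall d, Dset d -> aff al0 be0 ga d <= 0.
Proof.
  intros Hb0 Hc Hcs d Hd.
  assert (Hc' : forall v x y, us <= v <= uS -> 0 < x ->
     (-al0)*(v*al*x) + (-be0)*(a*(x-1) + b*y + v*x*be) <= b0*((-al0)*x + (-be0)*y + (-ga))).
  { intros v x y Hv Hx. specialize (Hc v x y Hv Hx). lra. }
  destruct (Rle_dec (aff al0 be0 ga d) 0) as [|Hn]; auto. exfalso.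
  apply (excl_gen a b al be us uS al0 be0 ga (fun p => 0 < aff al0 be0 ga p) Dset Hcs) with d; auto; [|lra].
  intros p Hp Hpos u gam Ha Hs.
  pose proof (lyap a b al be us uS _ _ _ b0 Hc' u p gam Hp Ha Hs 1 ltac:(lra)) as H1.
  assert (He : 1 < exp (b0*1)) by (apply exp_gt1; lra).
  exists (aff al0 be0 ga p * exp (b0*1)). split.
  - unfold aff in *. nra.
  - intros u' gam' t Ha' Hs' Ht.
    assert (Hp1 : inG (gam 1)) by (unfold inG; apply (sol_pos a b al be us uS u p gam); auto; lra).
    pose proof (lyap a b al be us uS _ _ _ b0 Hc' u' (gam 1) gam' Hp1 Ha' Hs' t Ht) as H2.
    assert (He2 : 1 <= exp (b0*t)) by (apply exp_ge1; nra).
    unfold aff in *. 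
    assert (Hz : (al0 * fst p + be0 * snd p + ga) * exp (b0*1) <= al0 * fst (gam 1) + be0 * snd (gam 1) + ga) by lra.
    assert (Hz2 : (al0 * fst (gam 1) + be0 * snd (gam 1) + ga) * exp (b0*t) <= al0 * fst (gam' t) + be0 * snd (gam' t) + ga) by lra.
    assert (0 < al0 * fst (gam 1) + be0 * snd (gam 1) + ga) by nra.
    nra.
Qed.

Lemma cs_glue a b al be us uS C :
  cs_props a b al be us uS C ->
  (forall Dset, cs_props a b al be us uS Dset -> forall p, Dset p -> C p) ->
  control_set a b al be us uS C /\
  (forall Dset, control_set a b al be us uS Dset -> forall p, Dset p <-> C p).
Proof.
  intros Hc Hmax. split.
  - split; auto. intros Dset HD Hsub p. split; auto. apply Hmax; auto.
  - intros Dset [HD HDm] p. 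
    assert (Hsub : forall p, Dset p -> C p) by (apply Hmax; auto).
    symmetry. apply (HDm C Hc Hsub p).
Qed.

Lemma orbit_refl a b al be us uS p : us <= 0 <= uS -> pos_orbit a b al be us uS p p.
Proof.
  intros H. exists (fun _ => 0), (flow a b al be 0 p), 0. split; [apply const_adm; auto|].
  split; [apply flow_sol|]. split; [lra|apply flow_0].
Qed.

Lemma orbit_closure a b al be us uS p q :
  pos_orbit a b al be us uS p q -> in_closure (pos_orbit a b al be us uS p) q.
Proof.
  intros H eps He. exists q. split; auto. rewrite !Rminus_diag, Rabs_R0. lra.
Qed.

Lemma orbit_bound_le a b al be us uS (al0 be0 ga b0 : R) p q :
  (forall v x y, us <= v <= uS -> 0 < x ->
     al0*(v*al*x) + be0*(a*(x-1) + b*y + v*x*be) <= b0*(al0*x + be0*y + ga)) ->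
  inG p -> pos_orbit a b al be us uS p q -> exists t, 0 <= t /\ aff al0 be0 ga q <= aff al0 be0 ga p * exp (b0*t).
Proof.
  intros Hc Hp [u [gam [t [Ha [Hs [Ht Heq]]]]]]. exists t. split; auto. subst q.
  apply (lyap a b al be us uS al0 be0 ga b0 Hc u p gam Hp Ha Hs t Ht).
Qed.

Lemma flow_al0_x a b be v p t : fst (flow a b 0 be v p t) = fst p.
Proof. unfold flow; simpl. rewrite Rmult_0_r, Rmult_0_l, exp_0. ring. Qed.

Lemma flow_al0_y a b be v p t ys :
  a*(fst p - 1) + v*fst p*be = - b * ys ->
  snd (flow a b 0 be v p t) = ys + exp (b*t) * (snd p - ys).
Proof.
  intros Hc. unfold flow; simpl. replace (v*0 - b) with (-b) by ring.
  pose proof (EE_id (-b) t) as HE.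
  assert (E : exp (b*t) * exp (-b*t) = 1).
  { rewrite <- exp_plus. replace (b*t + -b*t) with 0 by ring. apply exp_0. }
  replace (exp (b * t) * (snd p + (a + v * be) * fst p * EE (- b) t - a * EE (- b) t))
    with (exp (b*t) * snd p + (a*(fst p - 1) + v*fst p*be) * exp (b*t) * EE (-b) t) by ring.
  rewrite Hc.
  replace (- b * ys * exp (b * t) * EE (- b) t) with (ys * exp (b*t) * (-b * EE (-b) t)) by ring.
  rewrite HE. replace (-b*t) with (- b * t) by ring.
  replace (ys * exp (b*t) * (exp (- b*t) - 1)) with (ys * (exp (b*t) * exp (- b*t)) - ys*exp(b*t)) by ring.
  rewrite E. ring.
Qed.

Lemma flow_b0_y a be v p t :
  snd (flow a 0 0 be v p t) = snd p + (a*(fst p - 1) + v*fst p*be) * t.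
Proof.
  unfold flow; simpl. replace (v*0 - 0) with 0 by ring. replace (-0) with 0 by ring.
  rewrite !EE_mu0, Rmult_0_l, exp_0. ring.
Qed.



Lemma exp_small b M eps : b < 0 -> 0 <= M -> 0 < eps -> exists t, 0 <= t /\ exp (b*t) * M < eps.
Proof.
  intros Hb HM He.
  assert (Hq : 0 < eps / (M+1)) by (apply Rdiv_lt_0_compat; lra).
  destruct (Rle_dec 1 (eps/(M+1))) as [H1|H1].
  - exists 0. split. lra. rewrite Rmult_0_r, exp_0.
    assert (eps = eps/(M+1) * (M+1)) by (field; lra). nra.
  - exists (ln (eps/(M+1)) / b). 
    assert (Hl : ln (eps/(M+1)) < 0) by (rewrite <- ln_1; apply ln_increasing; lra).
    split.
    + unfold Rdiv. assert (/b < 0) by (apply Rinv_lt_0_compat; auto). nra.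
    + replace (b * (ln (eps / (M + 1)) / b)) with (ln (eps/(M+1))) by (field; lra).
      rewrite exp_ln by auto.
      assert (eps = eps/(M+1) * (M+1)) by (field; lra). nra.
Qed.

Lemma x_inv_closure a b be us uS p d : us <= 0 <= uS -> inG p ->
  in_closure (pos_orbit a b 0 be us uS p) d -> fst d = fst p.
Proof.
  intros H0 Hp Hc.
  assert (H1 : fst p <= aff 1 0 0 d).
  { apply (closure_aff (pos_orbit a b 0 be us uS p)); [|exact Hc]. intros s Hs.
    destruct (orbit_bound_le a b 0 be us uS (-1) 0 0 0 p s) as [t [_ Ht]]; auto.
    intros; lra. replace (0*t) with 0 in Ht by ring. rewrite exp_0 in Ht. unfold aff in *. lra. }
  assert (H2 : - fst p <= aff (-1) 0 0 d).
  { apply (closure_aff (pos_orbit a b 0 be us uS p)); [|exact Hc]. intros s Hs.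
    destruct (orbit_bound_le a b 0 be us uS 1 0 0 0 p s) as [t [_ Ht]]; auto.
    intros; lra. replace (0*t) with 0 in Ht by ring. rewrite exp_0 in Ht. unfold aff in *. lra. }
  unfold aff in *. lra.
Qed.

Lemma div_nonneg x y : 0 <= x -> 0 < y -> 0 <= x/y.
Proof. intros. unfold Rdiv. apply Rmult_le_pos; auto. left; apply Rinv_0_lt_compat; auto. Qed.

Definition phiw a b be w := aff (be*a + w*be*be) (be*b) (-(be*a)).

Lemma phiw_eq a b be w q : phiw a b be w q = be*(b*snd q + a*(fst q - 1) + w*be*fst q).
Proof. unfold phiw, aff. ring. Qed.

Lemma part1_pos a b be us uS x0 : 0 < b -> be <> 0 -> us < 0 -> 0 < uS -> 0 < x0 ->
  control_set a b 0 be us uS (fun q => q = (x0, -(a*(x0-1) + us*be*x0)/b)).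
Proof.
  intros Hb Hbe Hus HuS Hx0.
  set (y0 := -(a*(x0-1) + us*be*x0)/b).
  set (pt := (x0, y0)).
  assert (Hc : a*(fst pt - 1) + us*fst pt*be = - b * snd pt) by (simpl; unfold y0; field; lra).
  assert (Hpt : inG pt) by (unfold inG; simpl; lra).
  split; [split; [|split]|].
  - intros p ->. auto.
  - intros p ->. exists (fun _ => us), (flow a b 0 be us pt). split; [apply const_adm; lra|].
    split; [apply flow_sol|]. intros t _. fold pt.
    apply injective_projections. apply flow_al0_x.
    rewrite (flow_al0_y a b be us pt t (snd pt) Hc). ring.
  - intros p -> q ->. apply orbit_closure, orbit_refl; lra.
  - intros Dset HD Hsub p. split; [|apply Hsub]. intros Hp. fold y0. fold pt.
    assert (HptD : Dset pt) by (apply Hsub; auto).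
    assert (Hcl : in_closure (pos_orbit a b 0 be us uS pt) p) by (apply (proj2 (proj2 HD)); auto).
    assert (Hx : fst p = x0) by (apply (x_inv_closure a b be us uS pt p); auto; lra).
    assert (H1 : phiw a b be us p <= 0).
    { apply (excl_ge a b 0 be us uS _ _ _ b Dset Hb); auto.
      intros v x y Hv Hx'. assert (0 <= b * (be*be) * x * (v - us)).
      { apply Rmult_le_pos; [|lra]. apply Rmult_le_pos; [|lra]. apply Rmult_le_pos; [lra|]. nra. }
      nra. }
    assert (H2 : 0 <= phiw a b be us p).
    { apply (closure_aff (pos_orbit a b 0 be us uS pt)); [|exact Hcl]. intros s Hs.
      destruct (orbit_bound_le a b 0 be us uS (-(be*a + us*be*be)) (-(be*b)) (be*a) b pt s) as [t [_ Ht]]; auto.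
      intros v x y Hv Hx'. assert (0 <= b * (be*be) * x * (v - us)).
      { apply Rmult_le_pos; [|lra]. apply Rmult_le_pos; [|lra]. apply Rmult_le_pos; [lra|]. nra. }
      nra.
      unfold aff in Ht. unfold phiw, aff.
      assert (E0 : - (be * a + us * be * be) * fst pt + - (be * b) * snd pt + be * a = 0) by (simpl; unfold y0; field; lra).
      rewrite E0 in Ht. lra. }
    rewrite phiw_eq in H1, H2.
    assert (Hy : be * (b * snd p + a * (fst p - 1) + us * be * fst p) = 0) by lra.
    destruct p as [px py]. simpl in *. subst px. unfold pt. f_equal.
    unfold y0. apply Rmult_eq_reg_l with (be*b). 2: { apply Rmult_integral_contrapositive; split; lra. }
    field_simplify; [|lra]. nra.
Qed.

Lemma part1_neg a b be us uS x0 : b < 0 -> be <> 0 -> us < 0 -> 0 < uS -> 0 < x0 ->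
  control_set a b 0 be us uS
    (fun q => fst q = x0 /\ phiw a b be us q <= 0 /\ 0 <= phiw a b be uS q).
Proof.
  intros Hb Hbe Hus HuS Hx0.
  assert (Hbe2 : 0 < be*be) by nra.
  (* equilibrium control for a point of C *)
  assert (Veq : forall q, fst q = x0 -> phiw a b be us q <= 0 -> 0 <= phiw a b be uS q ->
      exists v, us <= v <= uS /\ a*(fst q - 1) + v*fst q*be = - b * snd q).
  { intros q Hq H1 H2. rewrite phiw_eq in H1, H2. rewrite Hq in *.
    exists (-(b*snd q + a*(x0-1))/(be*x0)).
    assert (Hk : 0 < be*be*x0) by nra.
    assert (E : -(b*snd q + a*(x0-1))/(be*x0) * (be*be*x0) = -(be*(b*snd q + a*(x0-1)))) by (field; split; lra).
    split; [split|].
    - apply Rmult_le_reg_r with (be*be*x0); auto. rewrite E. nra.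
    - apply Rmult_le_reg_r with (be*be*x0); auto. rewrite E. nra.
    - field; split; lra. }
  assert (Hpt : fst (x0, -(a*(x0-1) + us*be*x0)/b) = x0 /\
     phiw a b be us (x0, -(a*(x0-1) + us*be*x0)/b) <= 0 /\ 0 <= phiw a b be uS (x0, -(a*(x0-1) + us*be*x0)/b)).
  { rewrite !phiw_eq. simpl. split; auto.
    replace (b * (- (a * (x0 - 1) + us * be * x0) / b)) with (-(a * (x0 - 1) + us * be * x0)) by (field; lra).
    split.
    - match goal with |- ?L <= 0 => replace L with 0 by ring end. lra.
    - match goal with |- 0 <= ?L => replace L with ((be*be)*x0*(uS - us)) by ring end.
      apply Rmult_le_pos; [|lra]. apply Rmult_le_pos; lra. }
  split; [split; [|split]|].
  - intros p [Hp _]. unfold inG. lra.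
  - intros p Hp. destruct Hp as [Hp1 [Hp2 Hp3]].
    destruct (Veq p Hp1 Hp2 Hp3) as [v [Hv Hc]].
    exists (fun _ => v), (flow a b 0 be v p). split; [apply const_adm; lra|].
    split; [apply flow_sol|]. intros t _.
    replace (flow a b 0 be v p t) with p. split; auto.
    apply injective_projections. rewrite flow_al0_x; auto.
    rewrite (flow_al0_y a b be v p t (snd p) Hc). ring.
  - intros p Hp q Hq. destruct Hq as [Hq1 [Hq2 Hq3]].
    destruct (Veq q Hq1 Hq2 Hq3) as [v [Hv Hc]].
    intros eps He.
    destruct (exp_small b (Rabs (snd p - snd q)) eps Hb (Rabs_pos _) He) as [t [Ht Hsm]].
    exists (flow a b 0 be v p t). split.
    + exists (fun _ => v), (flow a b 0 be v p), t. split; [apply const_adm; lra|].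
      split; [apply flow_sol|]. split; auto.
    + rewrite flow_al0_x. destruct Hp as [Hp1 _]. rewrite Hp1, Hq1, Rminus_diag, Rabs_R0. split; [lra|].
      rewrite (flow_al0_y a b be v p t (snd q)). 
      replace (snd q + exp (b * t) * (snd p - snd q) - snd q) with (exp (b*t) * (snd p - snd q)) by ring.
      rewrite Rabs_mult, Rabs_pos_eq by (left; apply exp_pos). auto.
      rewrite Hp1, <- Hq1. auto.
  - intros Dset HD Hsub p. split; [|apply Hsub]. intros Hp.
    set (pt := (x0, -(a*(x0-1) + us*be*x0)/b)) in *.
    assert (HptD : Dset pt) by (apply Hsub; auto).
    assert (Hcl : in_closure (pos_orbit a b 0 be us uS pt) p) by (apply (proj2 (proj2 HD)); auto).
    assert (Hx : fst p = x0) by (apply (x_inv_closure a b be us uS pt p); auto; unfold inG, pt; simpl; lra).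
    split; auto. split.
    + apply (excl_le a b 0 be us uS _ _ _ b Dset Hb); auto.
      intros v x y Hv Hx'. assert (0 <= - b * (be*be) * x * (v - us)).
      { apply Rmult_le_pos; [|lra]. apply Rmult_le_pos; [|lra]. apply Rmult_le_pos; lra. }
      nra.
    + assert (aff (-(be*a + uS*be*be)) (-(be*b)) (be*a) p <= 0).
      { apply (excl_le a b 0 be us uS _ _ _ b Dset Hb); auto.
        intros v x y Hv Hx'. assert (0 <= - b * (be*be) * x * (uS - v)).
        { apply Rmult_le_pos; [|lra]. apply Rmult_le_pos; [|lra]. apply Rmult_le_pos; lra. }
        nra. }
      unfold phiw, aff in *. lra.
Qed.

Lemma part1_zero a be us uS x0 : be <> 0 -> us < 0 -> 0 < uS -> 0 < x0 ->
  be*(a*(x0-1) + us*be*x0) < 0 -> 0 < be*(a*(x0-1) + uS*be*x0) ->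
  control_set a 0 0 be us uS (fun q => fst q = x0).
Proof.
  intros Hbe Hus HuS Hx0 H1 H2.
  assert (Hpn : exists v w, us <= v <= uS /\ us <= w <= uS /\
     0 < a*(x0-1) + v*x0*be /\ a*(x0-1) + w*x0*be < 0).
  { destruct (Rlt_dec 0 be).
    - exists uS, us. repeat split; try lra; nra.
    - exists us, uS. repeat split; try lra; nra. }
  destruct Hpn as [v [w [Hv [Hw [Hcv Hcw]]]]].
  split; [split; [|split]|].
  - intros p Hp. unfold inG. lra.
  - intros p Hp. exists (fun _ => 0), (flow a 0 0 be 0 p). split; [apply const_adm; lra|].
    split; [apply flow_sol|]. intros t _. rewrite flow_al0_x. auto.
  - intros p Hp q Hq. apply orbit_closure.
    destruct (Rle_dec (snd p) (snd q)).
    + set (t := (snd q - snd p)/(a*(x0-1) + v*x0*be)).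
      exists (fun _ => v), (flow a 0 0 be v p), t. split; [apply const_adm; lra|].
      split; [apply flow_sol|]. split. unfold t. apply div_nonneg; lra.
      apply injective_projections. rewrite flow_al0_x; lra.
      rewrite flow_b0_y. rewrite Hp. unfold t. field. lra.
    + set (t := (snd q - snd p)/(a*(x0-1) + w*x0*be)).
      exists (fun _ => w), (flow a 0 0 be w p), t. split; [apply const_adm; lra|].
      split; [apply flow_sol|]. split. unfold t. 
      replace ((snd q - snd p) / (a * (x0 - 1) + w * x0 * be)) with ((snd p - snd q) / (-(a * (x0 - 1) + w * x0 * be))) by (field; lra).
      apply div_nonneg; lra.
      apply injective_projections. rewrite flow_al0_x; lra.
      rewrite flow_b0_y. rewrite Hp. unfold t. field. lra.
  - intros Dset HD Hsub p. split; [|apply Hsub]. intros Hp.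
    assert (HptD : Dset (x0, 0)) by (apply Hsub; auto).
    assert (Hcl : in_closure (pos_orbit a 0 0 be us uS (x0,0)) p) by (apply (proj2 (proj2 HD)); auto).
    apply (x_inv_closure a 0 be us uS (x0,0) p); auto; try lra; unfold inG; simpl; lra.
Qed.

Lemma INR1_pos n : 0 < INR n + 1.
Proof. pose proof (pos_INR n); lra. Qed.

Lemma INR1_inj m n : INR m + 1 = INR n + 1 -> m = n.
Proof. intros H. apply INR_eq. lra. Qed.

Lemma part1 a b al be us uS : ~ (al = 0 /\ be = 0) -> us < 0 -> 0 < uS -> al = 0 ->
  exists Cs : nat -> (R * R -> Prop),
    (forall n, control_set a b al be us uS (Cs n)) /\
    (forall m n, m <> n -> exists p, ~ (Cs m p <-> Cs n p)).
Proof.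
  intros habe Hus HuS Hal. subst al.
  assert (Hbe : be <> 0) by (intro; apply habe; auto).
  destruct (Rtotal_order b 0) as [Hb|[Hb|Hb]].
  - set (xn := fun n => INR n + 1).
    exists (fun n => fun q => fst q = xn n /\ phiw a b be us q <= 0 /\ 0 <= phiw a b be uS q).
    split.
    + intro n. apply part1_neg; auto. apply INR1_pos.
    + intros m n Hmn. exists (xn m, -(a*(xn m-1) + us*be*xn m)/b). intros [H1 _].
      assert (Hm : fst (xn m, -(a*(xn m-1) + us*be*xn m)/b) = xn m /\
        phiw a b be us (xn m, -(a*(xn m-1) + us*be*xn m)/b) <= 0 /\
        0 <= phiw a b be uS (xn m, -(a*(xn m-1) + us*be*xn m)/b)).
      { assert (Hx : 0 < xn m) by apply INR1_pos.
        rewrite !phiw_eq. simpl. split; auto.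
        replace (b * (- (a * (xn m - 1) + us * be * xn m) / b)) with (-(a * (xn m - 1) + us * be * xn m)) by (field; lra).
        split.
        - match goal with |- ?L <= 0 => replace L with 0 by ring end. lra.
        - match goal with |- 0 <= ?L => replace L with ((be*be)*xn m*(uS - us)) by ring end.
          apply Rmult_le_pos; [|lra]. apply Rmult_le_pos; [|lra]. nra. }
      destruct (H1 Hm) as [Hx _]. simpl in Hx. unfold xn in Hx. apply Hmn, INR1_inj; auto.
  - subst b.
    set (M := Rabs (a*be)). set (m := Rmin (-us) uS * (be*be)).
    assert (HM : 0 <= M) by apply Rabs_pos.
    assert (Hm : 0 < m) by (unfold m; apply Rmult_lt_0_compat; [apply Rmin_pos; lra| nra]).
    set (xn := fun n => 1 + m / ((M+1) * (INR n + 1))).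
    exists (fun n => fun q => fst q = xn n). split.
    + intro n. pose proof (INR1_pos n).
      assert (Hd : 0 < m / ((M+1) * (INR n + 1))) by (apply Rdiv_lt_0_compat; nra).
      assert (HMd : M * (m / ((M+1) * (INR n + 1))) < m).
      { assert (m / ((M + 1) * (INR n + 1)) <= m/(M+1)).
        { unfold Rdiv. apply Rmult_le_compat_l; [lra|]. pose proof (pos_INR n). apply Rinv_le_contravar; [lra|]. assert (0 <= (M+1) * INR n) by (apply Rmult_le_pos; lra). lra. }
        assert (M * (m/(M+1)) < m).
        { replace (M * (m/(M+1))) with (m - m/(M+1)) by (field; lra).
          assert (0 < m/(M+1)) by (apply Rdiv_lt_0_compat; lra). lra. }
        nra. }
      assert (Hab : - M <= a*be <= M) by (apply Rabs_def2b; unfold M; lra).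
      assert (Hmin1 : Rmin (-us) uS <= -us) by apply Rmin_l.
      assert (Hmin2 : Rmin (-us) uS <= uS) by apply Rmin_r.
      assert (Hbe2 : 0 < be*be) by nra.
      apply part1_zero; auto. unfold xn; lra.
      * unfold xn. set (d := m / ((M + 1) * (INR n + 1))) in *.
        replace (be * (a * (1 + d - 1) + us * be * (1 + d))) with (a*be*d + us*(be*be) + us*(be*be)*d) by ring.
        assert (m <= -us * (be*be)) by (unfold m; nra).
        assert (us*(be*be)*d <= 0) by nra. nra.
      * unfold xn. set (d := m / ((M + 1) * (INR n + 1))) in *.
        replace (be * (a * (1 + d - 1) + uS * be * (1 + d))) with (a*be*d + uS*(be*be) + uS*(be*be)*d) by ring.
        assert (m <= uS * (be*be)) by (unfold m; nra).
        assert (0 <= uS*(be*be)*d) by (apply Rmult_le_pos; [nra|]; apply Rlt_le; apply Rdiv_lt_0_compat; nra). nra.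
    + intros k n Hkn. exists (xn k, 0). intros [H1 _]. specialize (H1 eq_refl). simpl in H1.
      unfold xn in H1. apply Hkn, INR1_inj.
      pose proof (INR1_pos k). pose proof (INR1_pos n).
      assert (E : m / ((M + 1) * (INR k + 1)) = m / ((M + 1) * (INR n + 1))) by lra.
      apply (f_equal (fun z => m / ((M+1) * z))) in E.
      replace (m / ((M + 1) * (m / ((M + 1) * (INR k + 1))))) with (INR k + 1) in E by (field; repeat split; lra).
      replace (m / ((M + 1) * (m / ((M + 1) * (INR n + 1))))) with (INR n + 1) in E by (field; repeat split; lra).
      auto.
  - set (xn := fun n => INR n + 1).
    exists (fun n => fun q => q = (xn n, -(a*(xn n-1) + us*be*xn n)/b)). split.
    + intro n. apply part1_pos; auto. apply INR1_pos.
    + intros m n Hmn. exists (xn m, -(a*(xn m-1) + us*be*xn m)/b). intros [H1 _].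
      specialize (H1 eq_refl). injection H1 as Hx _. unfold xn in Hx. apply Hmn, INR1_inj; auto.
Qed.

Lemma dlin c0 c1 t : derivable_pt_lim (fun s => c0 + s * c1) t c1.
Proof. eapply dext. 2: { apply dplus. apply dconst. apply (dmult (fun s => s) (fun _ => c1)). apply did. apply dconst. } ring. Qed.

Lemma larc_true a b al be us uS : us < 0 -> 0 < uS -> al * (a*al + b*be) <> 0 ->
  LARC a b al be us uS.
Proof.
  intros Hus HuS Hk p Hp. unfold inG in Hp.
  set (k := a*al + b*be) in *.
  set (g := fun q : R*R => (al * fst q, be * fst q)).
  set (f0 := field a b al be 0).
  assert (Hg : lie_gen a b al be us uS g).
  { apply (lg_lin a b al be us uS (field a b al be uS) f0 g (1/uS) (-1/uS)).
    - apply lg_gen with uS; [lra|auto].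
    - apply lg_gen with 0; [lra|auto].
    - intros q _. unfold g, f0, field; simpl. f_equal; field; lra. }
  exists g, (fun q => (0, - k * fst q)). split; auto. split.
  - apply (lg_br a b al be us uS f0 g).
    + apply lg_gen with 0; [lra|auto].
    + auto.
    + intros q Hq. exists (0,0), (0, k * fst q). split; [|split].
      * unfold ddir, g, f0, field; simpl. split.
        -- eapply dext. 2: { apply dscal. apply dlin. } ring.
        -- eapply dext. 2: { apply dscal. apply dlin. } ring.
      * unfold ddir, g, f0, field; simpl. split.
        -- eapply dext. 2: { apply (dscal (0*al)). apply dlin. } ring.
        -- eapply dext. 2: { apply dplus. apply dplus. apply dscal. apply dminus. apply dlin. apply dconst.
             apply dscal. apply dlin.
             apply (dmult (fun s => 0 * (fst q + s * (al * fst q))) (fun _ => be)).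
             apply dscal. apply dlin. apply dconst. }
           unfold k. ring.
      * simpl. f_equal; ring.
  - unfold g; simpl. intro H. apply Hk.
    assert (0 < fst p * fst p) by nra.
    apply Rmult_eq_reg_r with (fst p * fst p); [|lra]. fold k. lra.
Qed.

Lemma tangent a b al be us uS X : a*al + b*be = 0 -> lie_gen a b al be us uS X ->
  forall p, inG p -> a*(fst p - 1) + b*snd p = 0 -> a * fst (X p) + b * snd (X p) = 0.
Proof.
  intros Hk HX. induction HX as [u Z Hu HZ | X Y Z c d HX IHX HY IHY HZ | X Y Z HX IHX HY IHY HZ];
    intros p Hp Hl.
  - rewrite HZ by auto. unfold field; simpl.
    replace (a * (u * al * fst p) + b * (a * (fst p - 1) + b * snd p + u * fst p * be))
      with (u * fst p * (a*al + b*be) + b * (a*(fst p - 1) + b*snd p)) by ring.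
    rewrite Hk, Hl. ring.
  - rewrite HZ by auto. simpl.
    replace (a * (c * fst (X p) + d * fst (Y p)) + b * (c * snd (X p) + d * snd (Y p)))
      with (c * (a * fst (X p) + b * snd (X p)) + d * (a * fst (Y p) + b * snd (Y p))) by ring.
    rewrite IHX, IHY by auto. ring.
  - destruct (HZ p Hp) as [dY [dX [HdY [HdX ->]]]]. simpl.
    assert (Gen : forall (W V : R*R -> R*R) dW, (forall q, inG q -> a*(fst q - 1) + b*snd q = 0 ->
         a * fst (W q) + b * snd (W q) = 0) ->
       a * fst (V p) + b * snd (V p) = 0 ->
       ddir W p (V p) dW -> a * fst dW + b * snd dW = 0).
    { intros W V dW HW HV [D1 D2].
      set (d0 := fst p / (Rabs (fst (V p)) + 1)).
      assert (Hd0 : 0 < d0) by (unfold d0, inG in *; apply Rdiv_lt_0_compat; [lra|pose proof (Rabs_pos (fst (V p))); lra]).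
      apply (dlim_unique_zero (fun s => a * fst (W (fst p + s * fst (V p), snd p + s * snd (V p))) +
                                         b * snd (W (fst p + s * fst (V p), snd p + s * snd (V p)))) _ d0 Hd0).
      - intros s Hs. apply HW.
        + unfold inG; simpl. unfold inG in Hp.
          assert (Rabs (s * fst (V p)) < fst p).
          { rewrite Rabs_mult. 
            assert (Rabs s * Rabs (fst (V p)) <= Rabs s * (Rabs (fst (V p)) + 1)) by (apply Rmult_le_compat_l; [apply Rabs_pos|lra]).
            assert (Rabs s * (Rabs (fst (V p)) + 1) < d0 * (Rabs (fst (V p)) + 1)) by (apply Rmult_lt_compat_r; [pose proof (Rabs_pos (fst (V p))); lra|auto]).
            assert (d0 * (Rabs (fst (V p)) + 1) = fst p) by (unfold d0; field; pose proof (Rabs_pos (fst (V p))); lra).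
            lra. }
          apply Rabs_def2 in H. lra.
        + simpl. replace (a * (fst p + s * fst (V p) - 1) + b * (snd p + s * snd (V p)))
            with ((a*(fst p - 1) + b*snd p) + s*(a * fst (V p) + b * snd (V p))) by ring.
          rewrite Hl, HV. ring.
      - apply dplus; apply dscal; auto. }
    replace (a * (fst dY - fst dX) + b * (snd dY - snd dX)) with
      ((a * fst dY + b * snd dY) - (a * fst dX + b * snd dX)) by ring.
    rewrite (Gen Y X dY IHY (IHX p Hp Hl) HdY), (Gen X Y dX IHX (IHY p Hp Hl) HdX). ring.
Qed.

Lemma larc_false a b al be us uS : ~ (a = 0 /\ b = 0) -> a*al + b*be = 0 -> ~ LARC a b al be us uS.
Proof.
  intros hab Hk HL. destruct (HL (1,0)) as [X [Y [HX [HY Hdet]]]]. unfold inG; simpl; lra.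
  assert (H1 : a * fst (X (1,0)) + b * snd (X (1,0)) = 0) by (apply (tangent a b al be us uS); auto; unfold inG; simpl; lra).
  assert (H2 : a * fst (Y (1,0)) + b * snd (Y (1,0)) = 0) by (apply (tangent a b al be us uS); auto; unfold inG; simpl; lra).
  set (x1 := fst (X (1,0))) in *. set (x2 := snd (X (1,0))) in *.
  set (y1 := fst (Y (1,0))) in *. set (y2 := snd (Y (1,0))) in *.
  assert (Ea : a * (x1 * y2 - x2 * y1) = 0).
  { replace (a * (x1 * y2 - x2 * y1)) with (y2 * (a*x1 + b*x2) - x2 * (a*y1 + b*y2)) by ring. rewrite H1, H2; ring. }
  assert (Eb : b * (x1 * y2 - x2 * y1) = 0).
  { replace (b * (x1 * y2 - x2 * y1)) with (x1 * (a*y1 + b*y2) - y1 * (a*x1 + b*x2)) by ring. rewrite H1, H2; ring. }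
  apply Hdet. destruct (Req_dec a 0) as [Ha|Ha].
  - assert (b <> 0) by (intro; apply hab; auto). apply Rmult_integral in Eb as [|]; [contradiction|auto].
  - apply Rmult_integral in Ea as [|]; [contradiction|auto].
Qed.

Lemma flow_m a b al be v p t :
  al * snd (flow a b al be v p t) - be * fst (flow a b al be v p t) =
  exp (b*t) * (al * snd p - be * fst p) + (a*al + b*be) * fst p * exp (b*t) * EE (v*al - b) t
  - a*al * exp (b*t) * EE (-b) t.
Proof.
  unfold flow; simpl.
  pose proof (EE_id (v*al - b) t) as H1.
  assert (H2 : exp (b*t) * exp ((v*al - b)*t) = exp (v*al*t)).
  { rewrite <- exp_plus. f_equal. ring. }
  transitivity (exp (b*t) * (al * snd p - be * fst p) + (a*al + b*be) * fst p * exp (b*t) * EE (v*al - b) t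
     - a*al * exp (b*t) * EE (-b) t + be * fst p * (exp (b*t) * ((v*al - b) * EE (v*al - b) t) + exp (b*t) - exp (v*al*t))).
  - ring.
  - rewrite H1. replace (exp (b*t) * (exp ((v*al - b)*t) - 1)) with (exp (b*t) * exp ((v*al-b)*t) - exp (b*t)) by ring.
    rewrite H2. ring.
Qed.

Lemma bEE b t : b * (exp (b*t) * EE (-b) t) = exp (b*t) - 1.
Proof.
  pose proof (EE_id (-b) t) as H.
  assert (E : exp (b*t) * exp (-b*t) = 1) by (rewrite <- exp_plus; replace (b*t + -b*t) with 0 by ring; apply exp_0).
  replace (b * (exp (b*t) * EE (-b) t)) with (- (exp (b*t) * (-b * EE (-b) t))) by ring.
  rewrite H. replace (exp (b * t) * (exp (- b * t) - 1)) with (exp (b*t) * exp (-b*t) - exp (b*t)) by ring.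
  rewrite E. ring.
Qed.

Lemma Rmin_Rmax_lam us uS al : us < 0 -> 0 < uS -> al <> 0 ->
  Rmin (us*al) (uS*al) < 0 < Rmax (us*al) (uS*al).
Proof.
  intros H1 H2 H3. unfold Rmin, Rmax. destruct (Rle_dec (us*al) (uS*al));
  destruct (Rlt_dec 0 al); split; nra.
Qed.

Lemma xmove us uS al x0 x1 : us < 0 -> 0 < uS -> al <> 0 -> 0 < x0 -> 0 < x1 ->
  exists v tau, us <= v <= uS /\ 0 <= tau /\ x0 * exp (v*al*tau) = x1.
Proof.
  intros Hus HuS Hal H0 H1.
  assert (Hex : exists v, us <= v <= uS /\ 0 < v*al*ln (x1/x0) \/ (us <= v <= uS /\ ln (x1/x0) = 0 /\ v = 0)).
  { destruct (Rtotal_order (ln (x1/x0)) 0) as [Hl|[Hl|Hl]].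
    - destruct (Rlt_dec 0 al). exists us. left. split. lra. assert (us*al < 0) by nra. nra.
      exists uS. left. split. lra. assert (al < 0) by lra. assert (uS*al < 0) by nra. nra.
    - exists 0. right. repeat split; lra.
    - destruct (Rlt_dec 0 al). exists uS. left. split. lra. assert (0 < uS*al) by nra. nra.
      exists us. left. split. lra. assert (al < 0) by lra. assert (0 < us*al) by nra. nra. }
  destruct Hex as [v [[Hv Hp]|[Hv [Hl Hv0]]]].
  - exists v, (ln (x1/x0) / (v*al)). split; auto.
    assert (Hva : v*al <> 0) by (intro Hz; rewrite Hz in Hp; lra).
    assert (Hv0 : v <> 0) by (intro Hz; apply Hva; rewrite Hz; ring).
    split.
    + replace (ln (x1 / x0) / (v * al)) with ((v*al*ln (x1/x0)) / ((v*al)*(v*al))) by (field; split; auto).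
      apply div_nonneg; [lra|]. assert (0 < (v*al)*(v*al)) by (apply Rsqr_pos_lt; auto). auto.
    + replace (v * al * (ln (x1 / x0) / (v * al))) with (ln (x1/x0)) by (field; split; auto).
      rewrite exp_ln by (apply Rdiv_lt_0_compat; auto). field. lra.
  - exists v, 0. split; auto. split. lra. rewrite Rmult_0_r, exp_0.
    assert (x1/x0 = 1). { rewrite <- (exp_ln (x1/x0)) by (apply Rdiv_lt_0_compat; auto). rewrite Hl. apply exp_0. }
    assert (Hq : x1 = x1/x0 * x0) by (field; lra). rewrite H in Hq. lra.
Qed.

Lemma part2_nonlarc a b al be us uS : ~ (a = 0 /\ b = 0) -> us < 0 -> 0 < uS -> al <> 0 ->
  a*al + b*be = 0 ->
  exists C, control_set a b al be us uS C /\
    (forall D, control_set a b al be us uS D -> forall p, D p <-> C p) /\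
    (nonempty_interior C <-> LARC a b al be us uS) /\
    (LARC a b al be us uS <-> al * (a * al + b * be) <> 0).
Proof.
  intros hab Hus HuS Hal Hk.
  assert (Hb : b <> 0). { intro Hb0. subst b. apply hab. split; auto. 
    apply Rmult_eq_reg_r with al; auto. lra. }
  set (c := a*al).
  set (C := fun q : R*R => 0 < fst q /\ b*(al*snd q - be*fst q) - c = 0).
  assert (Hfl : forall v q t, b*(al*snd (flow a b al be v q t) - be*fst (flow a b al be v q t)) - c =
        exp (b*t) * (b*(al*snd q - be*fst q) - c)).
  { intros v q t. rewrite flow_m, Hk.
    replace (b * (exp (b * t) * (al * snd q - be * fst q) + 0 * fst q * exp (b * t) * EE (v * al - b) t -
      a * al * exp (b * t) * EE (- b) t) - c) with
      (exp (b*t) * (b * (al * snd q - be * fst q)) - c * (b * (exp (b*t) * EE (-b) t)) - c) by (unfold c; ring).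
    rewrite bEE. ring. }
  assert (Hcs : cs_props a b al be us uS C).
  { split; [|split].
    - intros p [Hp _]. auto.
    - intros p [Hp1 Hp2]. exists (fun _ => 0), (flow a b al be 0 p). split; [apply const_adm; lra|].
      split; [apply flow_sol|]. intros t _. split.
      + unfold flow; simpl. apply Rmult_lt_0_compat; auto. apply exp_pos.
      + rewrite Hfl, Hp2. ring.
    - intros p [Hp1 Hp2] q [Hq1 Hq2]. apply orbit_closure.
      destruct (xmove us uS al (fst p) (fst q) Hus HuS Hal Hp1 Hq1) as [v [tau [Hv [Ht Hx]]]].
      exists (fun _ => v), (flow a b al be v p), tau. split; [apply const_adm; lra|].
      split; [apply flow_sol|]. split; auto.
      assert (Hx' : fst (flow a b al be v p tau) = fst q) by (unfold flow; simpl; auto).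
      pose proof (Hfl v p tau) as H. rewrite Hp2, Rmult_0_r in H.
      apply injective_projections; auto.
      rewrite Hx' in H. apply Rmult_eq_reg_l with (b*al). 2: { apply Rmult_integral_contrapositive; split; auto. }
      lra. }
  assert (Hmax : forall Dset, cs_props a b al be us uS Dset -> forall p, Dset p -> C p).
  { intros Dset HD p Hp. split. apply (proj1 HD p Hp).
    assert (Cd1 : forall v x y, us <= v <= uS -> 0 < x ->
      (-(b*be))*(v*al*x) + (b*al)*(a*(x-1) + b*y + v*x*be) = b*((-(b*be))*x + (b*al)*y + (-c))).
    { intros v x y _ _. unfold c.
      transitivity (b*((-(b*be))*x + (b*al)*y + (-(a*al))) + b*x*(a*al + b*be)); [ring|].
      rewrite Hk. ring. }
    destruct (Rlt_dec b 0) as [Hbn|Hbp].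
    - assert (H1 := excl_le a b al be us uS (-(b*be)) (b*al) (-c) b Dset Hbn ltac:(intros; rewrite Cd1; auto; lra) HD p Hp).
      assert (H2 := excl_le a b al be us uS (b*be) (-(b*al)) c b Dset Hbn
        ltac:(intros v x y Hv Hx; pose proof (Cd1 v x y Hv Hx); lra) HD p Hp).
      unfold aff in *. lra.
    - assert (Hbp' : 0 < b) by lra.
      assert (H1 := excl_ge a b al be us uS (-(b*be)) (b*al) (-c) b Dset Hbp' ltac:(intros; rewrite Cd1; auto; lra) HD p Hp).
      assert (H2 := excl_ge a b al be us uS (b*be) (-(b*al)) c b Dset Hbp'
        ltac:(intros v x y Hv Hx; pose proof (Cd1 v x y Hv Hx); lra) HD p Hp).
      unfold aff in *. lra. }
  destruct (cs_glue a b al be us uS C Hcs Hmax) as [Hc1 Hc2].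
  assert (NL : ~ LARC a b al be us uS) by (apply larc_false; auto).
  exists C. split; auto. split; auto. split.
  - split; [|tauto]. intros [p [eps [He Hin]]]. exfalso.
    assert (H1 := Hin p ltac:(rewrite Rminus_diag, Rabs_R0; lra) ltac:(rewrite Rminus_diag, Rabs_R0; lra)).
    assert (H2 := Hin (fst p, snd p + eps/2) ltac:(simpl; rewrite Rminus_diag, Rabs_R0; lra)
       ltac:(simpl; replace (snd p + eps/2 - snd p) with (eps/2) by ring; rewrite Rabs_pos_eq; lra)).
    destruct H1 as [_ H1]. destruct H2 as [_ H2]. simpl in H2.
    assert (b*al*(eps/2) = 0) by lra.
    apply Rmult_integral in H as [H|H]; [apply Rmult_integral in H as [|]|]; lra.
  - split; [tauto|]. intro H. exfalso. apply H. unfold c. rewrite Hk. ring.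
Qed.

Lemma endp_cons a b al be v tau r p : 0 <= tau ->
  endp a b al be ((v,tau)::r) p = endp a b al be r (flow a b al be v p tau).
Proof.
  intros H. simpl. destruct (Rlt_dec 0 tau); auto.
  assert (tau = 0) by lra. subst. rewrite flow_0. auto.
Qed.

Lemma flow_x a b al be v p t : fst (flow a b al be v p t) = fst p * exp (v*al*t).
Proof. reflexivity. Qed.

Lemma flow_m_b0 a al be v p t :
  al * snd (flow a 0 al be v p t) - be * fst (flow a 0 al be v p t) =
  (al * snd p - be * fst p) + (a*al) * (fst p * EE (v*al) t - t).
Proof.
  rewrite flow_m. replace (v*al - 0) with (v*al) by ring. replace (-0) with 0 by ring.
  rewrite EE_mu0, Rmult_0_l, exp_0. ring.
Qed.

Lemma pt_eq_xm al be p q : al <> 0 -> fst p = fst q -> al * snd p - be * fst p = al * snd q - be * fst q -> p = q.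
Proof.
  intros Hal Hx Hm. apply injective_projections; auto.
  apply Rmult_eq_reg_l with al; auto. rewrite Hx in Hm. lra.
Qed.

Lemma part2_b0 a al be us uS : us < 0 -> 0 < uS -> al <> 0 -> a*al <> 0 ->
  exists C, control_set a 0 al be us uS C /\
    (forall D, control_set a 0 al be us uS D -> forall p, D p <-> C p) /\
    nonempty_interior C.
Proof.
  intros Hus HuS Hal Hk.
  set (k := a*al).
  set (C := fun q : R*R => 0 < fst q).
  set (mm := fun q : R*R => al * snd q - be * fst q).
  assert (Hcs : cs_props a 0 al be us uS C).
  { split; [|split].
    - intros p Hp. auto.
    - intros p Hp. exists (fun _ => 0), (flow a 0 al be 0 p). split; [apply const_adm; lra|].
      split; [apply flow_sol|]. intros t _. unfold C. rewrite flow_x, Rmult_0_l, Rmult_0_l, exp_0, Rmult_1_r. auto.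
    - intros p Hp q Hq. apply orbit_closure. unfold C in *.
      destruct (xmove us uS al (fst p) 2 Hus HuS Hal Hp ltac:(lra)) as [v1 [t1 [Hv1 [Ht1 Hx1]]]].
      destruct (xmove us uS al 2 (1/2) Hus HuS Hal ltac:(lra) ltac:(lra)) as [v3 [t3 [Hv3 [Ht3 Hx3]]]].
      destruct (xmove us uS al (1/2) (fst q) Hus HuS Hal ltac:(lra) Hq) as [v5 [t5 [Hv5 [Ht5 Hx5]]]].
      set (D := fst p * EE (v1*al) t1 - t1 + (2 * EE (v3*al) t3 - t3) + (1/2 * EE (v5*al) t5 - t5)).
      set (R := (mm q - mm p)/k - D).
      set (t2 := Rmax R 0). set (t4 := -2 * Rmin R 0).
      assert (Ht2 : 0 <= t2) by apply Rmax_r.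
      assert (Ht4 : 0 <= t4) by (unfold t4; pose proof (Rmin_r R 0); lra).
      assert (HR : t2 - t4/2 = R) by (unfold t2, t4, Rmax, Rmin; destruct (Rle_dec R 0); lra).
      set (l := (v1,t1)::(0,t2)::(v3,t3)::(0,t4)::(v5,t5)::nil).
      assert (Hl : inOmega us uS l).
      { intros ph Hph. simpl in Hph. repeat (destruct Hph as [<-|Hph]; [simpl; lra|]). destruct Hph. }
      replace q with (endp a 0 al be l p). apply reach_endp; auto; lra.
      unfold l. rewrite !endp_cons by auto. simpl.
      set (P1 := flow a 0 al be v1 p t1).
      set (P2 := flow a 0 al be 0 P1 t2).
      set (P3 := flow a 0 al be v3 P2 t3).
      set (P4 := flow a 0 al be 0 P3 t4).
      set (P5 := flow a 0 al be v5 P4 t5).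
      assert (X1 : fst P1 = 2) by (unfold P1; rewrite flow_x; auto).
      assert (X2 : fst P2 = 2) by (unfold P2; rewrite flow_x, Rmult_0_l, Rmult_0_l, exp_0, Rmult_1_r; auto).
      assert (X3 : fst P3 = 1/2) by (unfold P3; rewrite flow_x, X2; auto).
      assert (X4 : fst P4 = 1/2) by (unfold P4; rewrite flow_x, Rmult_0_l, Rmult_0_l, exp_0, Rmult_1_r; auto).
      assert (X5 : fst P5 = fst q) by (unfold P5; rewrite flow_x, X4; auto).
      apply (pt_eq_xm al be); auto.
      assert (M1 : mm P1 = mm p + k * (fst p * EE (v1*al) t1 - t1)) by (unfold mm, P1; rewrite flow_m_b0; auto).
      assert (M2 : mm P2 = mm P1 + k * t2).
      { unfold mm, P2. rewrite flow_m_b0. fold (mm P1). rewrite X1. 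
        replace (0*al) with 0 by ring. rewrite EE_mu0. unfold k. ring. }
      assert (M3 : mm P3 = mm P2 + k * (2 * EE (v3*al) t3 - t3)) by (unfold mm, P3; rewrite flow_m_b0, X2; auto).
      assert (M4 : mm P4 = mm P3 - k * t4 / 2).
      { unfold mm, P4. rewrite flow_m_b0. fold (mm P3). rewrite X3. 
        replace (0*al) with 0 by ring. rewrite EE_mu0. unfold k. field. }
      assert (M5 : mm P5 = mm P4 + k * (1/2 * EE (v5*al) t5 - t5)) by (unfold mm, P5; rewrite flow_m_b0, X4; auto).
      fold (mm P5) (mm q). rewrite M5, M4, M3, M2, M1.
      assert (E : k * (t2 - t4/2) = k * R) by (rewrite HR; auto).
      unfold R, D in E. unfold D.
      replace (k * ((mm q - mm p) / k - (fst p * EE (v1 * al) t1 - t1 + (2 * EE (v3 * al) t3 - t3) + (1 / 2 * EE (v5 * al) t5 - t5))))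
        with (mm q - mm p - k * (fst p * EE (v1 * al) t1 - t1 + (2 * EE (v3 * al) t3 - t3) + (1 / 2 * EE (v5 * al) t5 - t5))) in E
        by (field; auto).
      lra. }
  assert (Hmax : forall Dset, cs_props a 0 al be us uS Dset -> forall p, Dset p -> C p).
  { intros Dset HD p Hp. apply (proj1 HD p Hp). }
  destruct (cs_glue a 0 al be us uS C Hcs Hmax) as [Hc1 Hc2].
  exists C. split; auto. split; auto.
  exists (1,0), (1/2). split; [lra|]. intros q Hq _. unfold C. simpl in Hq. apply Rabs_def2 in Hq. lra.
Qed.

Definition mm (al be : R) (q : R*R) := al * snd q - be * fst q.
Definition rr (a b al be : R) (q : R*R) := (a*al - b * mm al be q) / (a*al + b*be).
Definition VV (a b al be : R) (q : R*R) := rr a b al be q / fst q.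

Lemma flow_rr a b al be v p t : a*al + b*be <> 0 -> v*al <> b ->
  rr a b al be (flow a b al be v p t) =
  exp (b*t) * rr a b al be p + fst p * b * (exp (v*al*t) - exp (b*t)) / (b - v*al).
Proof.
  intros Hk Hl. unfold rr, mm. rewrite flow_m.
  pose proof (bEE b t) as H1. pose proof (EE_id (v*al - b) t) as H2.
  assert (H3 : exp (b*t) * exp ((v*al - b)*t) = exp (v*al*t)) by (rewrite <- exp_plus; f_equal; ring).
  assert (H4 : exp (b*t) * EE (v*al - b) t = (exp (v*al*t) - exp (b*t)) / (v*al - b)).
  { apply Rmult_eq_reg_l with (v*al - b); [|lra]. 
    replace ((v * al - b) * (exp (b * t) * EE (v * al - b) t)) with (exp (b*t) * ((v * al - b) * EE (v * al - b) t)) by ring.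
    rewrite H2. field_simplify; [|lra]. rewrite H3. ring. }
  replace (b * (exp (b * t) * (al * snd p - be * fst p) + (a * al + b * be) * fst p * exp (b * t) * EE (v * al - b) t -
       a * al * exp (b * t) * EE (- b) t))
    with (exp (b*t) * (b * (al * snd p - be * fst p)) + (a * al + b * be) * fst p * b * (exp (b * t) * EE (v * al - b) t) -
       a * al * (b * (exp (b * t) * EE (- b) t))) by ring.
  rewrite H1, H4. field. split; lra.
Qed.

Lemma flow_VV a b al be v p t : a*al + b*be <> 0 -> v*al <> b -> 0 < fst p ->
  VV a b al be (flow a b al be v p t) =
  b/(b - v*al) + (VV a b al be p - b/(b - v*al)) * exp ((b - v*al)*t).
Proof.
  intros Hk Hl Hp. unfold VV. rewrite flow_rr by auto. rewrite flow_x.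
  assert (E : exp ((b - v*al)*t) * exp (v*al*t) = exp (b*t)) by (rewrite <- exp_plus; f_equal; ring).
  pose proof (exp_pos (v*al*t)).
  rewrite <- E. field. repeat split; lra.
Qed.

Definition tau_of (b lam V0 V1 : R) : R :=
  if Req_EM_T V1 V0 then 0 else ln ((V1 - b/(b-lam)) / (V0 - b/(b-lam))) / (b - lam).

Definition fV (b lam V : R) := (b - lam) * V - b.

Lemma tau_of_spec b lam V0 V1 : lam <> b ->
  (V1 = V0 \/ (0 < fV b lam V0 * (V1 - V0) /\ 0 < fV b lam V1 * (V1 - V0))) ->
  0 <= tau_of b lam V0 V1 /\
  b/(b - lam) + (V0 - b/(b - lam)) * exp ((b - lam) * tau_of b lam V0 V1) = V1.
Proof.
  intros Hl H. unfold tau_of. destruct (Req_EM_T V1 V0) as [E|Ne].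
  - split; [lra|]. rewrite Rmult_0_r, exp_0. subst; ring.
  - destruct H as [H|[H1 H2]]; [contradiction|].
    set (mu := b - lam) in *. assert (Hmu : mu <> 0) by (unfold mu; lra).
    set (Vs := b/mu).
    assert (Ef : forall V, fV b lam V = mu * (V - Vs)) by (intro V; unfold fV, Vs; fold mu; field; auto).
    rewrite Ef in H1, H2.
    assert (Hw0 : V0 - Vs <> 0) by (intro Hz; rewrite Hz in H1; lra).
    set (r := (V1 - Vs)/(V0 - Vs)).
    assert (Hr1 : r - 1 = (V1 - V0)/(V0 - Vs)) by (unfold r; field; auto).
    assert (Hr : 0 < r).
    { unfold r. assert (0 < (mu * (V0 - Vs) * (V1 - V0)) * (mu * (V1 - Vs) * (V1 - V0))) by (apply Rmult_lt_0_compat; auto).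
      replace ((V1 - Vs) / (V0 - Vs)) with (((mu * (V0 - Vs) * (V1 - V0)) * (mu * (V1 - Vs) * (V1 - V0))) / ((mu*(V1 - V0))*(mu*(V1-V0))*((V0 - Vs)*(V0 - Vs)))).
      apply Rdiv_lt_0_compat; auto. 
      assert (mu * (V1 - V0) <> 0) by (apply Rmult_integral_contrapositive; split; lra).
      apply Rmult_lt_0_compat; apply Rsqr_pos_lt; auto.
      field. repeat split; auto; lra. }
    assert (Hsign : 0 < (r - 1) * mu).
    { rewrite Hr1. replace ((V1 - V0) / (V0 - Vs) * mu) with ((mu * (V0 - Vs) * (V1 - V0)) / ((V0 - Vs)*(V0 - Vs))) by (field; auto).
      apply Rdiv_lt_0_compat; auto. apply Rsqr_pos_lt; auto. }
    split.
    + fold r. destruct (Rlt_dec 0 mu).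
      * assert (1 < r) by nra. assert (0 < ln r) by (rewrite <- ln_1; apply ln_increasing; lra).
        left. apply Rdiv_lt_0_compat; auto.
      * assert (mu < 0) by lra. assert (r < 1) by nra. assert (ln r < 0) by (rewrite <- ln_1; apply ln_increasing; lra).
        left. replace (ln r / mu) with ((-ln r)/(-mu)) by (field; auto). apply Rdiv_lt_0_compat; lra.
    + fold r. replace (mu * (ln r / mu)) with (ln r) by (field; auto). rewrite exp_ln by auto.
      unfold r. field. auto.
Qed.

Lemma lamV_spec b lam V : V <> 0 -> fV b lam V = V * ((b - b/V) - lam).
Proof. intros. unfold fV. field. auto. Qed.

Definition lV (b V : R) := b - b/V.

Lemma fV_lV b lam V : V <> 0 -> fV b lam V = V * (lV b V - lam).
Proof. intros. unfold fV, lV. field. auto. Qed.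

Lemma lam_to_v us uS al lam : us < uS -> al <> 0 -> Rmin (us*al) (uS*al) <= lam <= Rmax (us*al) (uS*al) ->
  us <= lam/al <= uS /\ lam/al*al = lam.
Proof.
  intros Hu Hal H. split; [|field; auto].
  destruct (Rlt_dec 0 al).
  - rewrite Rmin_left, Rmax_right in H by nra.
    split; apply Rmult_le_reg_r with al; auto; replace (lam/al*al) with lam by (field; auto); lra.
  - assert (al < 0) by lra. rewrite Rmin_right, Rmax_left in H by nra.
    split; apply Rmult_le_reg_r with (-al); try lra;
      replace (lam/al*(-al)) with (-lam) by (field; auto); nra.
Qed.

Lemma pick_ne (x y b : R) : x <> y -> exists z, (z = x \/ z = y) /\ z <> b.
Proof.
  intros H. destruct (Req_dec x b). exists y. split; auto. intro; apply H; lra. exists x; auto.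
Qed.

Lemma steer b lm lp V0 V1 : b <> 0 -> lm < 0 < lp -> 0 < V0 -> 0 < V1 ->
  lm < lV b V1 < lp ->
  ((b < 0 /\ lm <= lV b V0 <= lp) \/ (lm < lV b V0 < lp)) ->
  exists lam, lm <= lam <= lp /\ lam <> b /\
    (V1 = V0 \/ (0 < fV b lam V0 * (V1 - V0) /\ 0 < fV b lam V1 * (V1 - V0))).
Proof.
  intros Hb Hl H0 H1 HV1 HV0.
  assert (Mono : lV b V0 - lV b V1 = b * (V0 - V1) / (V0 * V1)) by (unfold lV; field; lra).
  destruct (Rtotal_order V0 V1) as [Hlt|[Heq|Hgt]].
  - set (m := Rmin (lV b V0) (lV b V1)).
    assert (Hm0 : m <= lV b V0) by apply Rmin_l. assert (Hm1 : m <= lV b V1) by apply Rmin_r.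
    assert (Hlm0 : lm < lV b V0).
    { destruct HV0 as [[Hbn _]|[? _]]; auto.
      assert (0 < b * (V0 - V1) / (V0 * V1)) by (apply Rdiv_lt_0_compat; nra). lra. }
    assert (Hlm : lm < m) by (unfold m; apply Rmin_glb_lt; lra).
    destruct (pick_ne lm ((lm + m)/2) b ltac:(lra)) as [lam [Hlam Hne]].
    exists lam. split; [destruct Hlam; lra|]. split; auto. right.
    rewrite !fV_lV by lra. split; apply Rmult_lt_0_compat; try lra; apply Rmult_lt_0_compat; destruct Hlam; lra.
  - exists (if Req_EM_T lp b then lm else lp). split; [destruct (Req_EM_T lp b); lra|].
    split; [destruct (Req_EM_T lp b); lra|]. left; auto.
  - set (M := Rmax (lV b V0) (lV b V1)).
    assert (HM0 : lV b V0 <= M) by apply Rmax_l. assert (HM1 : lV b V1 <= M) by apply Rmax_r.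
    assert (Hlp0 : lV b V0 < lp).
    { destruct HV0 as [[Hbn _]|[_ ?]]; auto.
      assert (0 < - (b * (V0 - V1)) / (V0 * V1)) by (apply Rdiv_lt_0_compat; nra).
      assert (b * (V0 - V1) / (V0 * V1) = - (- (b * (V0 - V1)) / (V0 * V1))) by (field; lra). lra. }
    assert (Hlp : M < lp) by (unfold M; apply Rmax_lub_lt; lra).
    destruct (pick_ne lp ((M + lp)/2) b ltac:(lra)) as [lam [Hlam Hne]].
    exists lam. split; [destruct Hlam; lra|]. split; auto. right.
    rewrite !fV_lV by lra.
    split; [replace (V0 * (lV b V0 - lam) * (V1 - V0)) with (V0 * ((lam - lV b V0) * (V0 - V1))) by ring
           |replace (V1 * (lV b V1 - lam) * (V1 - V0)) with (V1 * ((lam - lV b V1) * (V0 - V1))) by ring];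
    apply Rmult_lt_0_compat; try lra; apply Rmult_lt_0_compat; destruct Hlam; lra.
Qed.

Definition lmin us uS al := Rmin (us*al) (uS*al).
Definition lmax us uS al := Rmax (us*al) (uS*al).

Definition Cset a b al be us uS (q : R*R) :=
  0 < fst q /\
  (b < 0 -> fV b (lmax us uS al) (VV a b al be q) <= 0 /\ 0 <= fV b (lmin us uS al) (VV a b al be q)) /\
  (0 < b -> fV b (lmax us uS al) (VV a b al be q) < 0 /\ 0 < fV b (lmin us uS al) (VV a b al be q)).

Definition Int a b al be us uS (q : R*R) :=
  0 < fst q /\ fV b (lmax us uS al) (VV a b al be q) < 0 /\ 0 < fV b (lmin us uS al) (VV a b al be q).

Lemma V_pos b lm lp V : b <> 0 -> lm < lp -> fV b lp V <= 0 -> 0 <= fV b lm V -> 0 < V.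
Proof.
  intros Hb Hl H1 H2. unfold fV in *. destruct (Rlt_dec 0 V) as [|Hn]; auto. exfalso.
  assert ((b - lm) * V - b - ((b - lp) * V - b) = (lp - lm) * V) by ring.
  assert ((lp - lm) * V <= 0) by nra.
  assert (V = 0) by nra. subst. lra.
Qed.

Lemma Cset_V a b al be us uS q : b <> 0 -> us < 0 -> 0 < uS -> al <> 0 ->
  Cset a b al be us uS q -> 0 < VV a b al be q /\
  ((b < 0 /\ lmin us uS al <= lV b (VV a b al be q) <= lmax us uS al) \/
   (lmin us uS al < lV b (VV a b al be q) < lmax us uS al)).
Proof.
  intros Hb Hus HuS Hal [Hx [Hn Hp]].
  pose proof (Rmin_Rmax_lam us uS al Hus HuS Hal) as Hl. fold (lmin us uS al) (lmax us uS al) in Hl.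
  set (V := VV a b al be q) in *.
  destruct (Rlt_dec b 0) as [Hb'|Hb'].
  - destruct (Hn Hb') as [H1 H2].
    assert (HV : 0 < V) by (apply (V_pos b (lmin us uS al) (lmax us uS al)); auto; lra).
    split; auto. left. split; auto. rewrite fV_lV in H1, H2 by lra.
    split; nra.
  - assert (Hb2 : 0 < b) by lra. destruct (Hp Hb2) as [H1 H2].
    assert (HV : 0 < V) by (apply (V_pos b (lmin us uS al) (lmax us uS al)); auto; lra).
    split; auto. right. rewrite fV_lV in H1, H2 by lra. split; nra.
Qed.

Lemma Int_V a b al be us uS q : b <> 0 -> us < 0 -> 0 < uS -> al <> 0 ->
  Int a b al be us uS q -> 0 < VV a b al be q /\
   lmin us uS al < lV b (VV a b al be q) < lmax us uS al.
Proof.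
  intros Hb Hus HuS Hal [Hx [H1 H2]].
  pose proof (Rmin_Rmax_lam us uS al Hus HuS Hal) as Hl. fold (lmin us uS al) (lmax us uS al) in Hl.
  set (V := VV a b al be q) in *.
  assert (HV : 0 < V) by (apply (V_pos b (lmin us uS al) (lmax us uS al)); auto; lra).
  split; auto. rewrite fV_lV in H1, H2 by lra. split; nra.
Qed.

Lemma Int_Cset a b al be us uS q : Int a b al be us uS q -> Cset a b al be us uS q.
Proof. intros [H1 [H2 H3]]. split; auto. split; intros; split; lra. Qed.

Lemma Cset_of_V a b al be us uS q : b <> 0 -> 0 < fst q ->
  ((b < 0 /\ fV b (lmax us uS al) (VV a b al be q) <= 0 /\ 0 <= fV b (lmin us uS al) (VV a b al be q)) \/
   (fV b (lmax us uS al) (VV a b al be q) < 0 /\ 0 < fV b (lmin us uS al) (VV a b al be q))) ->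
  Cset a b al be us uS q.
Proof.
  intros Hb Hx H. split; auto. split; intros Hs; destruct H as [[H0 [H1 H2]]|[H1 H2]]; split; lra.
Qed.

Lemma phase a b al be us uS lam P V1 : us < uS -> al <> 0 -> a*al + b*be <> 0 ->
  lmin us uS al <= lam <= lmax us uS al -> lam <> b -> 0 < fst P ->
  (V1 = VV a b al be P \/ (0 < fV b lam (VV a b al be P) * (V1 - VV a b al be P) /\
                          0 < fV b lam V1 * (V1 - VV a b al be P))) ->
  let tau := tau_of b lam (VV a b al be P) V1 in
  us <= lam/al <= uS /\ 0 <= tau /\
  VV a b al be (flow a b al be (lam/al) P tau) = V1 /\
  fst (flow a b al be (lam/al) P tau) = fst P * exp (lam * tau).
Proof.
  intros Hu Hal Hk Hl Hne HP Hc tau.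
  destruct (lam_to_v us uS al lam Hu Hal Hl) as [Hv Hva].
  destruct (tau_of_spec b lam (VV a b al be P) V1 Hne Hc) as [Ht HV].
  split; auto. split; auto. split.
  - rewrite flow_VV; [rewrite Hva; exact HV|auto|rewrite Hva; auto|auto].
  - rewrite flow_x, Hva. auto.
Qed.

Lemma hold a b al be us uS lam P t : us < uS -> al <> 0 -> a*al + b*be <> 0 ->
  lmin us uS al <= lam <= lmax us uS al -> lam <> b -> 0 < fst P ->
  VV a b al be P = b / (b - lam) ->
  us <= lam/al <= uS /\
  VV a b al be (flow a b al be (lam/al) P t) = VV a b al be P /\
  fst (flow a b al be (lam/al) P t) = fst P * exp (lam * t).
Proof.
  intros Hu Hal Hk Hl Hne HP HV.
  destruct (lam_to_v us uS al lam Hu Hal Hl) as [Hv Hva].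
  split; auto. split.
  - rewrite flow_VV; [rewrite Hva, HV; ring|auto|rewrite Hva; auto|auto].
  - rewrite flow_x, Hva. auto.
Qed.

Lemma pt_eq_xV a b al be p q : al <> 0 -> b <> 0 -> a*al + b*be <> 0 -> 0 < fst p ->
  fst p = fst q -> VV a b al be p = VV a b al be q -> p = q.
Proof.
  intros Hal Hb Hk Hp Hx HV. apply (pt_eq_xm al be); auto.
  unfold VV, rr in HV. rewrite <- Hx in HV. fold (mm al be p) (mm al be q).
  assert (E : (a * al - b * mm al be p) / (a * al + b * be) = (a * al - b * mm al be q) / (a * al + b * be)).
  { apply Rmult_eq_reg_r with (/ fst p). auto. apply Rinv_neq_0_compat; lra. }
  apply Rmult_eq_reg_l with (-b). 2: lra.
  apply Rplus_eq_reg_l with (a*al). apply Rmult_eq_reg_r with (/(a*al + b*be)). 2: apply Rinv_neq_0_compat; auto.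
  unfold Rdiv in E. lra.
Qed.

Lemma phase' a b al be us uS lam P V0 V1 : us < uS -> al <> 0 -> a*al + b*be <> 0 ->
  lmin us uS al <= lam <= lmax us uS al -> lam <> b -> 0 < fst P -> VV a b al be P = V0 ->
  (V1 = V0 \/ (0 < fV b lam V0 * (V1 - V0) /\ 0 < fV b lam V1 * (V1 - V0))) ->
  us <= lam/al <= uS /\ 0 <= tau_of b lam V0 V1 /\
  VV a b al be (flow a b al be (lam/al) P (tau_of b lam V0 V1)) = V1 /\
  fst (flow a b al be (lam/al) P (tau_of b lam V0 V1)) = fst P * exp (lam * tau_of b lam V0 V1).
Proof. intros until 6. intros <-. apply phase; auto. Qed.

Lemma reach_b a b al be us uS p q : us < 0 -> 0 < uS -> al <> 0 -> b <> 0 -> a*al + b*be <> 0 ->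
  Cset a b al be us uS p -> Int a b al be us uS q -> pos_orbit a b al be us uS p q.
Proof.
  intros Hus HuS Hal Hb Hk Hp Hq.
  pose proof (Rmin_Rmax_lam us uS al Hus HuS Hal) as Hl. fold (lmin us uS al) (lmax us uS al) in Hl.
  set (lm := lmin us uS al) in *. set (lp := lmax us uS al) in *.
  set (VVf := VV a b al be) in *.
  destruct (Cset_V a b al be us uS p Hb Hus HuS Hal Hp) as [HVp HVp'].
  destruct (Int_V a b al be us uS q Hb Hus HuS Hal Hq) as [HVq HVq'].
  fold lm lp VVf in HVp', HVq', HVp, HVq.
  assert (Hxp : 0 < fst p) by apply Hp. assert (Hxq : 0 < fst q) by apply Hq.
  assert (Hab : 0 < Rabs b) by (apply Rabs_pos_lt; auto).
  set (la := Rmin lp (Rabs b) / 2).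
  assert (Hla : 0 < la <= lp/2 /\ la <= Rabs b / 2).
  { unfold la. pose proof (Rmin_l lp (Rabs b)). pose proof (Rmin_r lp (Rabs b)).
    assert (0 < Rmin lp (Rabs b)) by (apply Rmin_pos; lra). lra. }
  set (lb := Rmax lm (- Rabs b) / 2).
  assert (Hlb : lm/2 <= lb < 0 /\ - Rabs b / 2 <= lb).
  { unfold lb. pose proof (Rmax_l lm (- Rabs b)). pose proof (Rmax_r lm (- Rabs b)).
    assert (Rmax lm (- Rabs b) < 0) by (apply Rmax_lub_lt; lra). lra. }
  assert (Hba : 0 < b * (b - la)).
  { destruct (Rlt_dec 0 b). rewrite Rabs_pos_eq in Hla by lra. nra. rewrite Rabs_left in Hla by lra. nra. }
  assert (Hbb : 0 < b * (b - lb)).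
  { destruct (Rlt_dec 0 b). rewrite Rabs_pos_eq in Hlb by lra. nra. rewrite Rabs_left in Hlb by lra. nra. }
  assert (Hla_ne : la <> b) by (intro E; rewrite E in Hba; nra).
  assert (Hlb_ne : lb <> b) by (intro E; rewrite E in Hbb; nra).
  set (Va := b / (b - la)). set (Vb := b / (b - lb)).
  assert (HVa : 0 < Va) by (unfold Va; replace (b/(b-la)) with (b*b / (b*(b-la))) by (field; split; nra);
     apply Rdiv_lt_0_compat; nra).
  assert (HVb : 0 < Vb) by (unfold Vb; replace (b/(b-lb)) with (b*b / (b*(b-lb))) by (field; split; nra);
     apply Rdiv_lt_0_compat; nra).
  assert (lVa : lV b Va = la) by (unfold lV, Va; field; split; nra).
  assert (lVb : lV b Vb = lb) by (unfold lV, Vb; field; split; nra).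
  destruct (steer b lm lp (VVf p) Va Hb Hl HVp HVa ltac:(rewrite lVa; lra) HVp') as [l1 [Hl1 [Hl1b Hc1]]].
  destruct (steer b lm lp Va Vb Hb Hl HVa HVb ltac:(rewrite lVb; lra) ltac:(right; rewrite lVa; lra)) as [l3 [Hl3 [Hl3b Hc3]]].
  destruct (steer b lm lp Vb (VVf q) Hb Hl HVb HVq HVq' ltac:(right; rewrite lVb; lra)) as [l5 [Hl5 [Hl5b Hc5]]].
  set (t1 := tau_of b l1 (VVf p) Va). set (t3 := tau_of b l3 Va Vb). set (t5 := tau_of b l5 Vb (VVf q)).
  set (R := ln (fst q / fst p) - (l1*t1 + l3*t3 + l5*t5)).
  set (t2 := Rmax R 0 / la). set (t4 := Rmin R 0 / lb).
  assert (Ht2 : 0 <= t2) by (unfold t2; apply div_nonneg; [apply Rmax_r|lra]).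
  assert (Ht4 : 0 <= t4).
  { unfold t4. replace (Rmin R 0 / lb) with ((- Rmin R 0) / (- lb)) by (field; lra).
    apply div_nonneg; [pose proof (Rmin_r R 0); lra|lra]. }
  assert (HR : la * t2 + lb * t4 = R).
  { unfold t2, t4. replace (la * (Rmax R 0 / la) + lb * (Rmin R 0 / lb)) with (Rmax R 0 + Rmin R 0) by (field; split; lra).
    unfold Rmax, Rmin. destruct (Rle_dec R 0); lra. }
  destruct (phase' a b al be us uS l1 p (VVf p) Va ltac:(lra) Hal Hk Hl1 Hl1b Hxp eq_refl Hc1) as [Hv1 [Ht1 [V1e X1e]]].
  fold VVf t1 in Ht1, V1e, X1e.
  set (P1 := flow a b al be (l1/al) p t1) in *.
  assert (HP1 : 0 < fst P1) by (rewrite X1e; apply Rmult_lt_0_compat; [lra|apply exp_pos]).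
  destruct (hold a b al be us uS la P1 t2 ltac:(lra) Hal Hk ltac:(change (lm <= la <= lp); lra) Hla_ne HP1 V1e) as [Hv2 [V2e X2e]].
  set (P2 := flow a b al be (la/al) P1 t2) in *.
  assert (HP2 : 0 < fst P2) by (rewrite X2e; apply Rmult_lt_0_compat; [lra|apply exp_pos]).
  assert (E2 : VVf P2 = Va) by (transitivity (VVf P1); [exact V2e|exact V1e]).
  destruct (phase' a b al be us uS l3 P2 Va Vb ltac:(lra) Hal Hk Hl3 Hl3b HP2 E2 Hc3) as [Hv3 [Ht3 [V3e X3e]]].
  fold t3 in Ht3, V3e, X3e.
  set (P3 := flow a b al be (l3/al) P2 t3) in *.
  assert (HP3 : 0 < fst P3) by (rewrite X3e; apply Rmult_lt_0_compat; [lra|apply exp_pos]).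
  destruct (hold a b al be us uS lb P3 t4 ltac:(lra) Hal Hk ltac:(change (lm <= lb <= lp); lra) Hlb_ne HP3 V3e) as [Hv4 [V4e X4e]].
  set (P4 := flow a b al be (lb/al) P3 t4) in *.
  assert (HP4 : 0 < fst P4) by (rewrite X4e; apply Rmult_lt_0_compat; [lra|apply exp_pos]).
  assert (E4 : VVf P4 = Vb) by (transitivity (VVf P3); [exact V4e|exact V3e]).
  destruct (phase' a b al be us uS l5 P4 Vb (VVf q) ltac:(lra) Hal Hk Hl5 Hl5b HP4 E4 Hc5) as [Hv5 [Ht5 [V5e X5e]]].
  fold t5 in Ht5, V5e, X5e.
  set (P5 := flow a b al be (l5/al) P4 t5) in *.
  set (l := (l1/al, t1)::(la/al, t2)::(l3/al, t3)::(lb/al, t4)::(l5/al, t5)::nil).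
  assert (Hlist : inOmega us uS l).
  { intros ph Hph. simpl in Hph. repeat (destruct Hph as [<-|Hph]; [simpl; auto|]). destruct Hph. }
  replace q with (endp a b al be l p). apply reach_endp; auto; lra.
  unfold l. rewrite !endp_cons by auto. simpl. fold P1 P2 P3 P4 P5.
  apply (pt_eq_xV a b al be); auto.
  - assert (H: 0 < fst P4 * exp (l5*t5)) by (apply Rmult_lt_0_compat; [lra|apply exp_pos]).
    rewrite <- X5e in H. exact H.
  - transitivity (fst P4 * exp (l5*t5)); [exact X5e|]. rewrite X4e, X3e, X2e, X1e.
    rewrite !Rmult_assoc, <- !exp_plus.
    replace (l1 * t1 + (la * t2 + (l3 * t3 + (lb * t4 + l5 * t5)))) with (ln (fst q / fst p)).
    rewrite exp_ln by (apply Rdiv_lt_0_compat; auto). field. lra.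
    unfold R in HR. lra.
Qed.

Definition FF a b al be lam :=
  aff ((b-lam)*b*be/(a*al+b*be) - b) (-((b-lam)*b*al/(a*al+b*be))) ((b-lam)*(a*al)/(a*al+b*be)).

Definition rra a b al be := aff (b*be/(a*al+b*be)) (-(b*al/(a*al+b*be))) ((a*al)/(a*al+b*be)).

Lemma rra_eq a b al be q : a*al+b*be <> 0 -> rra a b al be q = rr a b al be q.
Proof. intros. unfold rra, aff, rr, mm. field. auto. Qed.

Lemma FF_eq a b al be lam q : a*al+b*be <> 0 -> fst q <> 0 ->
  FF a b al be lam q = fst q * fV b lam (VV a b al be q).
Proof. intros. unfold FF, aff, fV, VV, rr, mm. field. auto. Qed.

Lemma FF_rr a b al be lam q : a*al+b*be <> 0 ->
  FF a b al be lam q = (b - lam) * rr a b al be q - b * fst q.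
Proof. intros. unfold FF, aff, rr, mm. field. auto. Qed.

Lemma FF_deriv a b al be lam v x y : a*al+b*be <> 0 ->
  ((b-lam)*b*be/(a*al+b*be) - b)*(v*al*x) + (-((b-lam)*b*al/(a*al+b*be)))*(a*(x-1) + b*y + v*x*be) =
  b * (((b-lam)*b*be/(a*al+b*be) - b)*x + (-((b-lam)*b*al/(a*al+b*be)))*y + (b-lam)*(a*al)/(a*al+b*be))
  + b*x*(lam - v*al).
Proof. intros. field. auto. Qed.

Lemma rr_deriv a b al be v x y : a*al+b*be <> 0 ->
  (b*be/(a*al+b*be))*(v*al*x) + (-(b*al/(a*al+b*be)))*(a*(x-1) + b*y + v*x*be) =
  b * ((b*be/(a*al+b*be))*x + (-(b*al/(a*al+b*be)))*y + (a*al)/(a*al+b*be) - x).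
Proof. intros. field. auto. Qed.

Definition mkpt a b al be (x V : R) : R*R := (x, ((a*al - (a*al+b*be)*(V*x))/b + be*x)/al).

Lemma VV_mkpt a b al be x V : al <> 0 -> b <> 0 -> a*al+b*be <> 0 -> x <> 0 ->
  VV a b al be (mkpt a b al be x V) = V.
Proof. intros. unfold VV, rr, mm, mkpt; simpl. field. repeat split; auto. Qed.

Lemma approx_int a b al be us uS q eps : us < 0 -> 0 < uS -> al <> 0 -> b <> 0 -> a*al+b*be <> 0 ->
  Cset a b al be us uS q -> 0 < eps ->
  exists q', Int a b al be us uS q' /\ Rabs (fst q' - fst q) < eps /\ Rabs (snd q' - snd q) < eps.
Proof.
  intros Hus HuS Hal Hb Hk Hq He.
  pose proof (Rmin_Rmax_lam us uS al Hus HuS Hal) as Hl. fold (lmin us uS al) (lmax us uS al) in Hl.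
  set (lm := lmin us uS al) in *. set (lp := lmax us uS al) in *.
  assert (Hx : 0 < fst q) by apply Hq.
  set (V := VV a b al be q) in *.
  assert (Hw : fV b lp V <= 0 /\ 0 <= fV b lm V).
  { destruct Hq as [_ [H1 H2]]. fold lm lp V in H1, H2. destruct (Rlt_dec b 0). apply H1; auto. destruct (H2 ltac:(lra)); split; lra. }
  set (K := Rabs ((a*al+b*be) * fst q * (1 - V) / (b*al)) + 1).
  assert (HK : 1 <= K) by (unfold K; pose proof (Rabs_pos ((a*al+b*be) * fst q * (1 - V) / (b*al))); lra).
  set (s := Rmin (1/2) (eps / (2*K))).
  assert (Hs : 0 < s) by (unfold s; apply Rmin_pos; [lra|apply Rdiv_lt_0_compat; lra]).
  assert (Hs1 : s <= 1/2) by apply Rmin_l.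
  assert (Hs2 : s <= eps/(2*K)) by apply Rmin_r.
  exists (mkpt a b al be (fst q) ((1-s)*V + s)).
  assert (HVq : VV a b al be (mkpt a b al be (fst q) ((1-s)*V + s)) = (1-s)*V + s) by (apply VV_mkpt; auto; lra).
  split; [split; [|split]|split].
  - simpl; auto.
  - rewrite HVq. fold lp lm. unfold fV in *.
    replace ((b - lp) * ((1 - s) * V + s) - b) with ((1-s)*((b - lp) * V - b) + s*(-lp)) by ring. nra.
  - rewrite HVq. fold lp lm. unfold fV in *.
    replace ((b - lm) * ((1 - s) * V + s) - b) with ((1-s)*((b - lm) * V - b) + s*(-lm)) by ring. nra.
  - simpl. rewrite Rminus_diag, Rabs_R0; auto.
  - assert (Eq : q = mkpt a b al be (fst q) V).
    { apply (pt_eq_xV a b al be); auto. rewrite VV_mkpt; auto; lra. }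
    rewrite Eq at 2. unfold mkpt; simpl.
    replace (((a * al - (a * al + b * be) * (((1 - s) * V + s) * fst q)) / b + be * fst q) / al -
      ((a * al - (a * al + b * be) * (V * fst q)) / b + be * fst q) / al)
     with (- s * ((a*al+b*be) * fst q * (1 - V) / (b*al))) by (field; split; auto).
    rewrite Rabs_mult, Rabs_Ropp, (Rabs_pos_eq s) by lra.
    assert (Rabs ((a*al+b*be) * fst q * (1 - V) / (b*al)) < K) by (unfold K; lra).
    assert (s * Rabs ((a*al+b*be) * fst q * (1 - V) / (b*al)) <= s * K) by (apply Rmult_le_compat_l; lra).
    assert (s * K <= eps/(2*K) * K) by (apply Rmult_le_compat_r; lra).
    assert (eps/(2*K)*K = eps/2) by (field; lra). lra.
Qed.

Lemma Cset_props a b al be us uS : us < 0 -> 0 < uS -> al <> 0 -> b <> 0 -> a*al+b*be <> 0 ->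
  cs_props a b al be us uS (Cset a b al be us uS).
Proof.
  intros Hus HuS Hal Hb Hk.
  pose proof (Rmin_Rmax_lam us uS al Hus HuS Hal) as Hl. fold (lmin us uS al) (lmax us uS al) in Hl.
  split; [|split].
  - intros p Hp. apply Hp.
  - intros p Hp. destruct (Cset_V a b al be us uS p Hb Hus HuS Hal Hp) as [HV HV'].
    set (lam := lV b (VV a b al be p)).
    assert (Hlam : lmin us uS al <= lam <= lmax us uS al) by (unfold lam; destruct HV'; lra).
    assert (Hne : lam <> b) by (unfold lam, lV; intro E; assert (b / VV a b al be p = 0) by lra;
       unfold Rdiv in H; apply Rmult_integral in H as [|H]; [auto|apply Rinv_neq_0_compat in H; lra]).
    assert (Heq : VV a b al be p = b/(b - lam)) by (unfold lam, lV; field; split; lra).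
    assert (Hx : 0 < fst p) by apply Hp.
    destruct (lam_to_v us uS al lam ltac:(lra) Hal Hlam) as [Hv _].
    exists (fun _ => lam/al), (flow a b al be (lam/al) p). split; [apply const_adm; auto|].
    split; [apply flow_sol|]. intros t _.
    destruct (hold a b al be us uS lam p t ltac:(lra) Hal Hk Hlam Hne Hx Heq) as [_ [HVt Hxt]].
    destruct Hp as [_ [H1 H2]].
    split; [rewrite Hxt; apply Rmult_lt_0_compat; [lra|apply exp_pos]|].
    rewrite HVt. split; auto.
  - intros p Hp q Hq eps He.
    destruct (approx_int a b al be us uS q eps Hus HuS Hal Hb Hk Hq He) as [q' [Hq' [H1 H2]]].
    exists q'. split; auto. apply reach_b; auto.
Qed.

Lemma strict_excl a b al be us uS (p1 p2 p3 q1 q2 q3 kap b0 : R) Dset :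
  us < 0 -> 0 < uS -> al <> 0 -> 0 < kap ->
  (forall v x y, us <= v <= uS -> 0 < x ->
     q1*(v*al*x) + q2*(a*(x-1) + b*y + v*x*be) <= b0*(q1*x + q2*y + q3)) ->
  (forall v x y, us <= v <= uS -> 0 < x -> q1*x + q2*y + q3 <= 0 ->
     kap * x <= p1*(v*al*x) + p2*(a*(x-1) + b*y + v*x*be)) ->
  cs_props a b al be us uS Dset -> forall d, Dset d -> 0 < aff q1 q2 q3 d.
Proof.
  intros Hus HuS Hal Hkap Hpsi Hphi Hcs d Hd.
  set (lm := Rmin (us*al) (uS*al)).
  assert (Hlm : lm < 0) by (unfold lm; apply (Rmin_Rmax_lam us uS al); auto).
  assert (Hxlb : forall v x y, us <= v <= uS -> 0 < x ->
     (-1)*(v*al*x) + 0*(a*(x-1) + b*y + v*x*be) <= lm*((-1)*x + 0*y + 0)).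
  { intros v x y Hv Hx. pose proof (lam_bounds us uS al v Hv) as [H1 _]. fold lm in H1. nra. }
  assert (Inv : forall u p gam, inG p -> admissible us uS u -> is_solution a b al be u p gam ->
     aff q1 q2 q3 p <= 0 -> forall s, 0 <= s -> aff q1 q2 q3 (gam s) <= 0).
  { intros u p gam Hp Ha Hs Hq s Hs0.
    pose proof (lyap a b al be us uS q1 q2 q3 b0 Hpsi u p gam Hp Ha Hs s Hs0).
    pose proof (exp_pos (b0*s)). unfold aff in *. nra. }
  destruct (Rlt_le_dec 0 (aff q1 q2 q3 d)) as [|Hle]; auto. exfalso.
  apply (excl_gen a b al be us uS p1 p2 p3 (fun p => aff q1 q2 q3 p <= 0) Dset Hcs) with d; auto.
  intros p Hp Hq u gam Ha Hs.
  assert (Hx1 : forall s, 0 <= s -> fst p * exp (lm*s) <= fst (gam s)).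
  { intros s Hs0. pose proof (lyap a b al be us uS (-1) 0 0 lm Hxlb u p gam Hp Ha Hs s Hs0). lra. }
  set (xm := fst p * exp lm).
  assert (Hxm : 0 < xm) by (unfold xm; apply Rmult_lt_0_compat; [apply Hp|apply exp_pos]).
  assert (L1 := lin_decr a b al be us uS (-p1) (-p2) (-p3) (kap * xm)
     (fun s q => aff q1 q2 q3 q <= 0 /\ xm <= fst q) u p gam 1 Hp Ha Hs ltac:(lra)).
  assert (L1' : (-p1) * fst (gam 1) + (-p2) * snd (gam 1) + (-p3) + kap * xm * 1 <= (-p1) * fst p + (-p2) * snd p + (-p3)).
  { apply L1.
    - intros s Hs0. split. apply (Inv u p gam); auto; lra.
      unfold xm. apply Rle_trans with (fst p * exp (lm*s)); [|apply Hx1; lra].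
      apply Rmult_le_compat_l; [left; apply Hp|]. 
      destruct (Req_dec s 1) as [->|]; [rewrite Rmult_1_r; lra|left; apply exp_increasing; nra].
    - intros s v x y _ [Hq1 Hq2] Hv Hx. simpl in Hq1, Hq2. unfold aff in Hq1; simpl in Hq1.
      pose proof (Hphi v x y Hv Hx Hq1). nra. }
  exists (aff p1 p2 p3 (gam 1)). split.
  - unfold aff. assert (0 < kap * xm) by nra. lra.
  - intros u' gam' t Ha' Hs' Ht.
    assert (Hp1 : inG (gam 1)) by (unfold inG; apply (sol_pos a b al be us uS u p gam); auto; lra).
    assert (Hq1 : aff q1 q2 q3 (gam 1) <= 0) by (apply (Inv u p gam); auto; lra).
    assert (L2 := lin_decr a b al be us uS (-p1) (-p2) (-p3) 0
       (fun s q => aff q1 q2 q3 q <= 0) u' (gam 1) gam' t Hp1 Ha' Hs' Ht).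
    assert (L2' : (-p1) * fst (gam' t) + (-p2) * snd (gam' t) + (-p3) + 0 * t <= (-p1) * fst (gam 1) + (-p2) * snd (gam 1) + (-p3)).
    { apply L2.
      - intros s Hs0. apply (Inv u' (gam 1) gam'); auto; lra.
      - intros s v x y _ Hq' Hv Hx. unfold aff in Hq'; simpl in Hq'.
        pose proof (Hphi v x y Hv Hx Hq'). nra. }
    unfold aff. lra.
Qed.

Lemma rra_FF a b al be lam x y : a*al+b*be <> 0 ->
  ((b-lam)*b*be/(a*al+b*be) - b)*x + (-((b-lam)*b*al/(a*al+b*be)))*y + (b-lam)*(a*al)/(a*al+b*be) =
  (b - lam) * ((b*be/(a*al+b*be))*x + (-(b*al/(a*al+b*be)))*y + (a*al)/(a*al+b*be)) - b*x.
Proof. intros. field. auto. Qed.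

Lemma Cset_max a b al be us uS : us < 0 -> 0 < uS -> al <> 0 -> b <> 0 -> a*al+b*be <> 0 ->
  forall Dset, cs_props a b al be us uS Dset -> forall d, Dset d -> Cset a b al be us uS d.
Proof.
  intros Hus HuS Hal Hb Hk Dset HD d Hd.
  pose proof (Rmin_Rmax_lam us uS al Hus HuS Hal) as Hl. fold (lmin us uS al) (lmax us uS al) in Hl.
  set (lm := lmin us uS al) in *. set (lp := lmax us uS al) in *.
  assert (Hx : 0 < fst d) by (apply (proj1 HD); auto).
  assert (Lb : forall v, us <= v <= uS -> lm <= v*al <= lp).
  { intros v Hv. apply (lam_bounds us uS al v Hv). }
  assert (HFF : forall lam, FF a b al be lam d = fst d * fV b lam (VV a b al be d)) by (intros; apply FF_eq; auto; lra).
  apply Cset_of_V; auto.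
  destruct (Rlt_dec b 0) as [Hbn|Hbp].
  - left. split; auto.
    assert (H1 : FF a b al be lp d <= 0).
    { apply (excl_le a b al be us uS _ _ _ b Dset Hbn); auto.
      intros v x y Hv Hx'. rewrite FF_deriv by auto. pose proof (Lb v Hv). 
      assert (b * x * (lp - v*al) <= 0) by (assert (0 <= x * (lp - v*al)) by nra; nra). lra. }
    assert (H2 : aff (-((b-lm)*b*be/(a*al+b*be) - b)) (((b-lm)*b*al/(a*al+b*be))) (-((b-lm)*(a*al)/(a*al+b*be))) d <= 0).
    { apply (excl_le a b al be us uS _ _ _ b Dset Hbn); auto.
      intros v x y Hv Hx'. pose proof (FF_deriv a b al be lm v x y Hk) as E.
      pose proof (Lb v Hv).
      assert (0 <= b * x * (lm - v*al)) by (assert (x * (lm - v*al) <= 0) by nra; nra).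
      replace (((b-lm)*b*al/(a*al+b*be))) with (- - ((b-lm)*b*al/(a*al+b*be))) by ring.
      lra. }
    assert (H2' : 0 <= FF a b al be lm d) by (unfold FF, aff in *;  lra).
    rewrite HFF in H1, H2'. fold lp lm. split; nra.
  - assert (Hbp' : 0 < b) by lra. right.
    assert (Hbl : 0 < b - lm) by lra.
    assert (H1 : 0 < aff ((b-lm)*b*be/(a*al+b*be) - b) (-((b-lm)*b*al/(a*al+b*be))) ((b-lm)*(a*al)/(a*al+b*be)) d).
    { apply (strict_excl a b al be us uS (-(b*be/(a*al+b*be))) (b*al/(a*al+b*be)) (-((a*al)/(a*al+b*be))) _ _ _ (- b * lm / (b - lm)) b Dset); auto.
      - apply Rdiv_lt_0_compat; nra.
      - intros v x y Hv Hx'. pose proof (FF_deriv a b al be lm v x y Hk) as E.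
        pose proof (Lb v Hv). assert (b * x * (lm - v*al) <= 0) by (assert (x * (lm - v*al) <= 0) by nra; nra). lra.
      - intros v x y Hv Hx' Hq. rewrite rra_FF in Hq by auto.
        pose proof (rr_deriv a b al be v x y Hk) as E.
        set (rv := b * be / (a*al+b*be) * x + - (b * al / (a*al+b*be)) * y + a * al / (a*al+b*be)) in *.
        replace (- (b * be / (a*al+b*be)) * (v * al * x) + b * al / (a*al+b*be) * (a * (x - 1) + b * y + v * x * be))
          with (- ((b*be/(a*al+b*be)) * (v*al*x) + - (b*al/(a*al+b*be)) * (a * (x - 1) + b * y + v * x * be))) by ring.
        rewrite E.
        apply Rmult_le_reg_r with (b - lm); auto.
        replace (- b * lm / (b - lm) * x * (b - lm)) with (- b * lm * x) by (field; lra).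
        replace (- (b * (rv - x)) * (b - lm)) with (- b * ((b - lm) * rv - b*x) - b*lm*x) by (unfold rv; ring).
        nra. }
    assert (H1' : 0 < FF a b al be lm d) by (unfold FF; auto).
    assert (H2' : FF a b al be lp d < 0).
    { destruct (Rlt_dec lp b) as [Hlpb|Hlpb].
      - assert (Hbl2 : 0 < b - lp) by lra.
        assert (H2 : 0 < aff (-((b-lp)*b*be/(a*al+b*be) - b)) (((b-lp)*b*al/(a*al+b*be))) (-((b-lp)*(a*al)/(a*al+b*be))) d).
        { apply (strict_excl a b al be us uS (b*be/(a*al+b*be)) (-(b*al/(a*al+b*be))) ((a*al)/(a*al+b*be)) _ _ _ (b * lp / (b - lp)) b Dset); auto.
          - apply Rdiv_lt_0_compat; nra.
          - intros v x y Hv Hx'. pose proof (FF_deriv a b al be lp v x y Hk) as E.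
            pose proof (Lb v Hv). assert (0 <= b * x * (lp - v*al)) by (assert (0 <= x * (lp - v*al)) by nra; nra).
            replace (((b-lp)*b*al/(a*al+b*be))) with (- - ((b-lp)*b*al/(a*al+b*be))) by ring. lra.
          - intros v x y Hv Hx' Hq.
            assert (Hq' : 0 <= ((b-lp)*b*be/(a*al+b*be) - b)*x + (-((b-lp)*b*al/(a*al+b*be)))*y + (b-lp)*(a*al)/(a*al+b*be)) by lra.
            rewrite rra_FF in Hq' by auto.
            pose proof (rr_deriv a b al be v x y Hk) as E. rewrite E.
            set (rv := b * be / (a*al+b*be) * x + - (b * al / (a*al+b*be)) * y + a * al / (a*al+b*be)) in *.
            apply Rmult_le_reg_r with (b - lp); auto.
            replace (b * lp / (b - lp) * x * (b - lp)) with (b * lp * x) by (field; lra).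
            replace (b * (rv - x) * (b - lp)) with (b * ((b - lp) * rv - b*x) + b*lp*x) by (unfold rv; ring).
            nra. }
        unfold FF, aff in *. lra.
      - rewrite FF_rr in H1' |- * by auto.
        assert (0 < rr a b al be d) by nra. nra. }
    rewrite HFF in H1', H2'. fold lp lm. split; nra.
Qed.

Lemma aff_close al0 be0 ga q e eps : Rabs (fst q - fst e) < eps -> Rabs (snd q - snd e) < eps ->
  Rabs (aff al0 be0 ga q - aff al0 be0 ga e) <= (Rabs al0 + Rabs be0) * eps.
Proof.
  intros H1 H2. unfold aff.
  replace (al0 * fst q + be0 * snd q + ga - (al0 * fst e + be0 * snd e + ga)) with
    (al0 * (fst q - fst e) + be0 * (snd q - snd e)) by ring.
  eapply Rle_trans; [apply Rabs_triang|]. rewrite !Rabs_mult.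
  assert (Rabs al0 * Rabs (fst q - fst e) <= Rabs al0 * eps) by (apply Rmult_le_compat_l; [apply Rabs_pos|lra]).
  assert (Rabs be0 * Rabs (snd q - snd e) <= Rabs be0 * eps) by (apply Rmult_le_compat_l; [apply Rabs_pos|lra]).
  lra.
Qed.

Lemma part2_larc_b a b al be us uS : us < 0 -> 0 < uS -> al <> 0 -> b <> 0 -> a*al+b*be <> 0 ->
  exists C, control_set a b al be us uS C /\
    (forall D, control_set a b al be us uS D -> forall p, D p <-> C p) /\
    nonempty_interior C.
Proof.
  intros Hus HuS Hal Hb Hk.
  destruct (cs_glue a b al be us uS (Cset a b al be us uS) (Cset_props a b al be us uS Hus HuS Hal Hb Hk)
     (Cset_max a b al be us uS Hus HuS Hal Hb Hk)) as [H1 H2].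
  exists (Cset a b al be us uS). split; auto. split; auto.
  pose proof (Rmin_Rmax_lam us uS al Hus HuS Hal) as Hl. fold (lmin us uS al) (lmax us uS al) in Hl.
  set (lm := lmin us uS al) in *. set (lp := lmax us uS al) in *.
  set (e := mkpt a b al be 1 1).
  assert (HVe : VV a b al be e = 1) by (apply VV_mkpt; auto; lra).
  assert (Hxe : fst e = 1) by reflexivity.
  set (A1 := Rabs ((b-lp)*b*be/(a*al+b*be) - b) + Rabs (-((b-lp)*b*al/(a*al+b*be)))).
  set (A2 := Rabs ((b-lm)*b*be/(a*al+b*be) - b) + Rabs (-((b-lm)*b*al/(a*al+b*be)))).
  assert (HA1 : 0 <= A1) by (unfold A1; pose proof (Rabs_pos ((b-lp)*b*be/(a*al+b*be) - b)); pose proof (Rabs_pos (-((b-lp)*b*al/(a*al+b*be)))); lra).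
  assert (HA2 : 0 <= A2) by (unfold A2; pose proof (Rabs_pos ((b-lm)*b*be/(a*al+b*be) - b)); pose proof (Rabs_pos (-((b-lm)*b*al/(a*al+b*be)))); lra).
  set (dl := Rmin lp (-lm)).
  assert (Hdl : 0 < dl) by (unfold dl; apply Rmin_pos; lra).
  assert (Hdl1 : dl <= lp) by apply Rmin_l. assert (Hdl2 : dl <= -lm) by apply Rmin_r.
  set (eps := Rmin (1/2) (dl / (A1 + A2 + 1))).
  assert (He : 0 < eps) by (unfold eps; apply Rmin_pos; [lra|apply Rdiv_lt_0_compat; lra]).
  assert (He1 : eps <= 1/2) by apply Rmin_l. assert (He2 : eps <= dl / (A1 + A2 + 1)) by apply Rmin_r.
  assert (HAe : (A1 + A2) * eps < dl).
  { assert ((A1 + A2 + 1) * eps <= dl).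
    { apply Rle_trans with ((A1 + A2 + 1) * (dl / (A1 + A2 + 1))). apply Rmult_le_compat_l; lra.
      right. field. lra. }
    lra. }
  exists e, eps. split; auto. intros q Hq1 Hq2.
  apply Int_Cset.
  assert (Hxq : 0 < fst q) by (rewrite Hxe in Hq1; apply Rabs_def2 in Hq1; lra).
  assert (F1 := aff_close ((b-lp)*b*be/(a*al+b*be) - b) (-((b-lp)*b*al/(a*al+b*be))) ((b-lp)*(a*al)/(a*al+b*be)) q e eps Hq1 Hq2).
  assert (F2 := aff_close ((b-lm)*b*be/(a*al+b*be) - b) (-((b-lm)*b*al/(a*al+b*be))) ((b-lm)*(a*al)/(a*al+b*be)) q e eps Hq1 Hq2).
  fold (FF a b al be lp) in F1. fold (FF a b al be lm) in F2.
  rewrite !FF_eq in F1, F2 by (auto; lra).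
  rewrite HVe, Hxe in F1, F2. unfold fV in F1, F2 |- *.
  fold A1 in F1. fold A2 in F2.
  apply Rabs_def2b in F1. apply Rabs_def2b in F2.
  assert (A1 * eps <= (A1 + A2) * eps) by (apply Rmult_le_compat_r; lra).
  assert (A2 * eps <= (A1 + A2) * eps) by (apply Rmult_le_compat_r; lra).
  split; auto. split.
  - assert (fst q * ((b - lp) * VV a b al be q - b) < 0) by nra.
    change (fV b lp (VV a b al be q) < 0). unfold fV.
    apply (Rmult_lt_reg_l (fst q)); auto. nra.
  - assert (0 < fst q * ((b - lm) * VV a b al be q - b)) by nra.
    change (0 < fV b lm (VV a b al be q)). unfold fV.
    apply (Rmult_lt_reg_l (fst q)); auto. nra.
Qed.

Theorem theorem1 (a b al be us uS : R)
  (hab : ~ (a = 0 /\ b = 0)) (habe : ~ (al = 0 /\ be = 0))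
  (hus : us < 0) (huS : 0 < uS) :
  (al = 0 ->
     exists Cs : nat -> (R * R -> Prop),
       (forall n, control_set a b al be us uS (Cs n)) /\
       (forall m n, m <> n -> exists p, ~ (Cs m p <-> Cs n p))) /\
  (al <> 0 ->
     exists C, control_set a b al be us uS C /\
       (forall D, control_set a b al be us uS D -> forall p, D p <-> C p) /\
       (nonempty_interior C <-> LARC a b al be us uS) /\
       (LARC a b al be us uS <-> al * (a * al + b * be) <> 0)).
Proof.
  split.
  - intros Hal. apply part1; auto.
  - intros Hal. destruct (Req_dec (a*al + b*be) 0) as [Hk|Hk].
    + apply part2_nonlarc; auto.
    + assert (HL : LARC a b al be us uS) by (apply larc_true; auto; apply Rmult_integral_contrapositive; split; auto).
      assert (Hk' : al * (a * al + b * be) <> 0) by (apply Rmult_integral_contrapositive; split; auto).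
      destruct (Req_dec b 0) as [Hb|Hb].
      * subst b. assert (Hk2 : a*al <> 0) by (intro; apply Hk; lra).
        destruct (part2_b0 a al be us uS hus huS Hal Hk2) as [C [H1 [H2 H3]]].
        exists C. split; auto. split; auto. split; split; auto.
      * destruct (part2_larc_b a b al be us uS hus huS Hal Hb Hk) as [C [H1 [H2 H3]]].
        exists C. split; auto. split; auto. split; split; auto.
Qed.
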